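(* The diagram $\mathcal D_c$ admits a lifting, with respect to the functor $\operatorname{Con}_c$, by a diagram of finite lattices and lattice embeddings.
   Context: Posets are viewed as categories (one morphism $p\to q$ iff $p\leq q$); a $P$-diagram in a category is a functor from $P$. $\operatorname{Con}_c$ is the functor sending a lattice $L$ to its $\{\vee,0\}$-semilattice of compact (finitely generated) congruences, and a lattice homomorphism $f\colon K\to L$ to the map sending a compact congruence $\alpha$ of $K$ to the congruence of $L$ generated by $\{(f(x),f(y)):(x,y)\in\alpha\}$. A $P$-diagram $\mathcal L$ of lattices lifts a $P$-diagram $\mathcal S$ of semilattices if $\operatorname{Con}_c\circ\mathcal L$ and $\mathcal S$ are naturally isomorphic. The diagram $\mathcal D_c$ is indexed by $\mathcal P(\{0,1,2\})$ ordered by inclusion. Let $U=\mathcal P(\{0,1,2,3,4\})$ with union and $\varnothing$. Put $\xi_0=\{0,4\},\xi_1=\{3\},\xi_2=\{2\},\xi_3=\{1,4\}$; $\eta_0=\{0,4\},\eta_1=\{1,4\},\eta_2=\{2\},\eta_3=\{3,4\}$; $\zeta_0=\{0,4\},\zeta_1=\{1\},\zeta_2=\{3\},\zeta_3=\{2,4\}$; $\alpha_0=\{0,1,4\},\beta_0=\{2,3,4\}$; $\alpha_1=\{0,3,4\},\beta_1=\{1,2,4\}$; $\alpha_2=\{0,2,4\},\beta_2=\{1,3,4\}$. Let $T_0$ (resp. $T_1$, $T_2$) be the $\{\vee,0\}$-subsemilattice of $U$ generated by the $\xi_j$ (resp. $\eta_j$, $\zeta_j$), $j<4$; $S_i$ ($i<3$)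 the one generated by $\{\alpha_i,\beta_i\}$; $\mathbf 2=\{\varnothing,\{0,1,2,3,4\}\}$. $\mathcal D_c$ assigns $\mathbf 2$ to $\varnothing$, $S_i$ to $\{i\}$, $T_j$ to $\{0,1,2\}\setminus\{j\}$, $U$ to $\{0,1,2\}$, with inclusion maps. *)

(* Defs.v *)
From HB Require Import structures.
From mathcomp Require Import all_boot all_order.
Set Implicit Arguments. Unset Strict Implicit. Unset Printing Implicit Defensive.
Import Order.TTheory.

Section Congruences.
Variables (d : Order.disp_t) (T : finLatticeType d).

Definition is_con (th : {set T * T}) : bool :=
  [&& [forall x : T, (x, x) \in th],
      [forall x : T, forall y : T, ((x, y) \in th) ==> ((y, x) \in th)],
      [forall x : T, forall y : T, forall z : T,
          ((x, y) \in th) && ((y, z) \in th) ==> ((x, z) \in th)] &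
      [forall a : T, forall b : T, forall c : T, forall e : T,
          ((a, b) \in th) && ((c, e) \in th) ==>
          ((Order.meet a c, Order.meet b e) \in th) &&
          ((Order.join a c, Order.join b e) \in th)]].

Definition Cg (A : {set T * T}) : {set T * T} :=
  \bigcap_(th : {set T * T} | is_con th && (A \subset th)) th.

(* Compact (= finitely generated) congruences; T is finite, so every
   subset of T*T is finite. *)
Definition ConC : {set {set T * T}} := [set Cg A | A : {set T * T}].

Definition con_join (a b : {set T * T}) : {set T * T} := Cg (a :|: b).
Definition con_zero : {set T * T} := Cg set0.

End Congruences.

Definition conc_map d (K : finLatticeType d) d' (L : finLatticeType d')
  (f : K -> L) (a : {set K * K}) : {set L * L} :=
  Cg [set (f p.1, f p.2) | p in a].

Definition lattice_embedding d (K : finLatticeType d) d' (L : finLatticeType d')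
  (f : K -> L) : Prop :=
  injective f /\
  (forall x y : K, f (Order.meet x y) = Order.meet (f x) (f y)) /\
  (forall x y : K, f (Order.join x y) = Order.join (f x) (f y)).

Definition s5 (l : seq nat) : {set 'I_5} := [set i : 'I_5 | nat_of_ord i \in l].

Definition subsl_gen (G : {set {set 'I_5}}) : {set {set 'I_5}} :=
  \bigcap_(X : {set {set 'I_5}} |
       [&& set0 \in X, G \subset X &
           [forall a in X, forall b in X, (a :|: b) \in X]]) X.

Definition xi0 := s5 [:: 0; 4]. Definition xi1 := s5 [:: 3].
Definition xi2 := s5 [:: 2].    Definition xi3 := s5 [:: 1; 4].
Definition eta0 := s5 [:: 0; 4]. Definition eta1 := s5 [:: 1; 4].
Definition eta2 := s5 [:: 2].    Definition eta3 := s5 [:: 3; 4].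
Definition zeta0 := s5 [:: 0; 4]. Definition zeta1 := s5 [:: 1].
Definition zeta2 := s5 [:: 3].    Definition zeta3 := s5 [:: 2; 4].
Definition alpha0 := s5 [:: 0; 1; 4]. Definition beta0 := s5 [:: 2; 3; 4].
Definition alpha1 := s5 [:: 0; 3; 4]. Definition beta1 := s5 [:: 1; 2; 4].
Definition alpha2 := s5 [:: 0; 2; 4]. Definition beta2 := s5 [:: 1; 3; 4].

Definition T0 := subsl_gen [set xi0; xi1; xi2; xi3].
Definition T1 := subsl_gen [set eta0; eta1; eta2; eta3].
Definition T2 := subsl_gen [set zeta0; zeta1; zeta2; zeta3].
Definition S0 := subsl_gen [set alpha0; beta0].
Definition S1 := subsl_gen [set alpha1; beta1].
Definition S2 := subsl_gen [set alpha2; beta2].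
Definition Two : {set {set 'I_5}} := [set set0; setT].
Definition U : {set {set 'I_5}} := setT.

(* D_c on objects; indices are subsets of {0,1,2} = 'I_3.  All maps of D_c
   are inclusions into U. *)
Definition Dc (I : {set 'I_3}) : {set {set 'I_5}} :=
  match (inord 0 \in I), (inord 1 \in I), (inord 2 \in I) with
  | false, false, false => Two
  | true,  false, false => S0
  | false, true,  false => S1
  | false, false, true  => S2
  | false, true,  true  => T0
  | true,  false, true  => T1
  | true,  true,  false => T2
  | true,  true,  true  => U
  end.

(* Main.v *)
Require Import Defs.
From HB Require Import structures.
From mathcomp Require Import all_boot all_order.
Set Implicit Arguments. Unset Strict Implicit. Unset Printing Implicit Defensive.
Import Order.TTheory.

Section Gen.
Context {d : Order.disp_t} {K : finLatticeType d}.
Local Notation mt := (@Order.meet _ K).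
Local Notation jn := (@Order.join _ K).

Definition CON (th : {set K * K}) : Prop :=
  [/\ forall x, (x, x) \in th,
      forall x y, (x, y) \in th -> (y, x) \in th,
      forall x y z, (x, y) \in th -> (y, z) \in th -> (x, z) \in th &
      forall a b c e, (a, b) \in th -> (c, e) \in th ->
        ((mt a c, mt b e) \in th) /\ ((jn a c, jn b e) \in th)].

Lemma is_conP th : reflect (CON th) (is_con th).
Proof.
apply: (iffP and4P).
  case=> /forallP r /forallP s /forallP t /forallP c; split.
  - exact: r.
  - by move=> x y; move/forallP: (s x) => /(_ y) /implyP; apply.
  - move=> x y z H1 H2; move/forallP: (t x) => /(_ y) /forallP /(_ z) /implyP; apply.
    by rewrite H1 H2.
  - move=> a b c' e H1 H2.
    move/forallP: (c a) => /(_ b) /forallP /(_ c') /forallP /(_ e) /implyP.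
    by rewrite H1 H2 => /(_ isT) /andP.
case=> r s t c; split.
- by apply/forallP.
- by apply/forallP=> x; apply/forallP=> y; apply/implyP; apply: s.
- apply/forallP=> x; apply/forallP=> y; apply/forallP=> z; apply/implyP=> /andP [];
  exact: t.
- apply/forallP=> a; apply/forallP=> b; apply/forallP=> c'; apply/forallP=> e.
  by apply/implyP=> /andP [H1 H2]; apply/andP; apply: c.
Qed.

Lemma CON_meet th x y z : CON th -> (x, y) \in th -> (mt x z, mt y z) \in th.
Proof. by case=> r _ _ c H; case: (c _ _ _ _ H (r z)). Qed.
Lemma CON_join th x y z : CON th -> (x, y) \in th -> (jn x z, jn y z) \in th.
Proof. by case=> r _ _ c H; case: (c _ _ _ _ H (r z)). Qed.

Lemma CgP (A : {set K * K}) p : reflect (forall th, CON th -> A \subset th -> p \in th) (p \in Cg A).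
Proof.
apply: (iffP bigcapP) => H th.
  by move=> /is_conP c s; apply: H; rewrite c s.
by case/andP=> /is_conP c s; apply: H.
Qed.

Lemma Cg_con (A : {set K * K}) : CON (Cg A).
Proof.
split.
- by move=> x; apply/CgP=> th [r _ _ _].
- by move=> x y /CgP H; apply/CgP=> th c s; case: (c) => _ sy _ _; apply/sy/H.
- move=> x y z /CgP H1 /CgP H2; apply/CgP=> th c s; case: (c) => _ _ tr _.
  by apply: tr (H1 _ c s) (H2 _ c s).
- move=> a b c' e /CgP H1 /CgP H2; split; apply/CgP=> th c s; case: (c) => _ _ _ cc;
  by case: (cc _ _ _ _ (H1 _ c s) (H2 _ c s)).
Qed.

Lemma sub_Cg (A : {set K * K}) : A \subset Cg A.
Proof. by apply/subsetP=> p pA; apply/CgP=> th _ /subsetP; apply. Qed.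

Lemma Cg_min (A : {set K * K}) th : CON th -> A \subset th -> Cg A \subset th.
Proof. by move=> c s; apply/subsetP=> p /CgP; apply. Qed.

Lemma Cg_id th : CON th -> Cg th = th.
Proof. by move=> c; apply/eqP; rewrite eqEsubset Cg_min ?sub_Cg. Qed.

Lemma ConC_con a : a \in ConC K -> CON a.
Proof. by case/imsetP=> A _ ->; apply: Cg_con. Qed.

Lemma con_ConC th : CON th -> th \in ConC K.
Proof. by move=> c; apply/imsetP; exists th; rewrite ?Cg_id. Qed.

End Gen.

Section Funct.
Context {d : Order.disp_t} {K : finLatticeType d} {d' : Order.disp_t} {L : finLatticeType d'}.
Variable g : K -> L.
Hypothesis gM : forall x y, g (Order.meet x y) = Order.meet (g x) (g y).
Hypothesis gJ : forall x y, g (Order.join x y) = Order.join (g x) (g y).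

Definition img (A : {set K * K}) : {set L * L} := [set (g p.1, g p.2) | p in A].

Lemma Cg_img A : Cg (img (Cg A)) = Cg (img A).
Proof.
apply/eqP; rewrite eqEsubset; apply/andP; split; last first.
  apply: Cg_min; first exact: Cg_con.
  apply/subsetP=> q /imsetP [p pA ->]; apply: (subsetP (sub_Cg _)).
  by apply/imsetP; exists p => //; apply: (subsetP (sub_Cg _)).
apply: Cg_min; first exact: Cg_con.
pose th := [set p : K * K | (g p.1, g p.2) \in Cg (img A)].
have cth : CON th.
  have [r s t c] := Cg_con (img A).
  split.
  - by move=> x; rewrite inE r.
  - by move=> x y; rewrite !inE; apply: s.
  - by move=> x y z; rewrite !inE; apply: t.
  - move=> a b c' e; rewrite !inE => H1 H2; rewrite !gM !gJ; exact: c.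
have sA : Cg A \subset th.
  apply: Cg_min => //; apply/subsetP=> p pA; rewrite inE.
  by apply: (subsetP (sub_Cg _)); apply/imsetP; exists p.
apply/subsetP=> q /imsetP [p /(subsetP sA)]; by rewrite inE => H ->.
Qed.
End Funct.

Section BCP.
Context {d : Order.disp_t} (K : finLatticeType d).
Local Notation mt := (@Order.meet _ K).
Local Notation jn := (@Order.join _ K).

Record bcp := BCP {
  lab : finType;
  labs : seq lab;
  labsP : forall k, k \in labs;
  rl : lab -> rel K;
  uu : lab -> K; vv : lab -> K;
  bt : K; tp : K;
  rl_refl : forall k x, rl k x x;
  rl_sym : forall k x y, rl k x y -> rl k y x;
  rl_trans : forall k x y z, rl k x y -> rl k y z -> rl k x z;
  rl_meet : forall k x y z, rl k x y -> rl k (mt x z) (mt y z);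
  rl_join : forall k x y z, rl k x y -> rl k (jn x z) (jn y z);
  rl_uv : forall k j, rl j (uu k) (vv k) = (j != k);
  bcpB3 : forall th, CON th -> forall x y k, (x, y) \in th -> ~~ rl k x y -> (uu k, vv k) \in th;
  bcpB4 : forall th, CON th -> forall x y,
     (forall k, ~~ rl k x y -> (uu k, vv k) \in th) -> (x, y) \in th;
  bt_meet : forall x, mt bt x = bt;
  tp_join : forall x, jn tp x = tp }.

Variable P : bcp.

Definition Th (S : {set lab P}) : {set K * K} :=
  [set p | [forall k, (k \notin S) ==> rl k p.1 p.2]].
Definition SS (th : {set K * K}) : {set lab P} := [set k | (uu k, vv k) \in th].

Lemma ThP (S : {set lab P}) x y : reflect (forall k, k \notin S -> rl k x y) ((x, y) \in Th S).
Proof.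
rewrite inE; apply: (iffP forallP) => H k; first by move=> kS; move/implyP: (H k); apply.
by apply/implyP; apply: H.
Qed.

Lemma Th_con (S : {set lab P}) : CON (Th S).
Proof.
split.
- by move=> x; apply/ThP=> k _; apply: rl_refl.
- by move=> x y /ThP H; apply/ThP=> k kS; apply/rl_sym/H.
- by move=> x y z /ThP H1 /ThP H2; apply/ThP=> k kS; apply: rl_trans (H1 _ kS) (H2 _ kS).
- move=> a b c e /ThP H1 /ThP H2; split; apply/ThP=> k kS.
  + apply: (@rl_trans _ k _ (mt b c)); first exact: rl_meet (H1 _ kS).
    rewrite ![mt b _]meetC; exact: rl_meet (H2 _ kS).
  + apply: (@rl_trans _ k _ (jn b c)); first exact: rl_join (H1 _ kS).
    rewrite ![jn b _]joinC; exact: rl_join (H2 _ kS).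
Qed.

Lemma SS_Th (S : {set lab P}) : SS (Th S) = S.
Proof.
apply/setP=> k; rewrite inE; apply/ThP/idP => [H|kS j jS].
  by apply/negPn/negP=> /H; rewrite rl_uv eqxx.
by rewrite rl_uv; apply: contraNneq jS => ->.
Qed.

Lemma con_Th th : CON th -> th = Th (SS th).
Proof.
move=> c; apply/setP=> -[x y]; apply/idP/idP => [H|/ThP H].
  apply/ThP=> k; rewrite inE; apply: contraNT; exact: (bcpB3 c H).
apply: (bcpB4 c) => k nk; apply/negPn/negP => nS.
by move: (H k); rewrite inE => /(_ nS); rewrite (negbTE nk).
Qed.

Lemma Th_mono (S1 S2 : {set lab P}) : S1 \subset S2 -> Th S1 \subset Th S2.
Proof.
move=> /subsetP s; apply/subsetP=> -[x y] /ThP H; apply/ThP=> k kS; apply: H.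
by apply: contra kS; apply: s.
Qed.

Lemma SS_mono (a b : {set K * K}) : a \subset b -> SS a \subset SS b.
Proof. by move=> /subsetP s; apply/subsetP=> k; rewrite !inE; apply: s. Qed.

Lemma SS_join a b : a \in ConC K -> b \in ConC K -> SS (con_join a b) = SS a :|: SS b.
Proof.
move=> /ConC_con ca /ConC_con cb; rewrite /con_join.
apply/eqP; rewrite eqEsubset; apply/andP; split; last first.
  rewrite subUset !SS_mono //; apply: subset_trans (sub_Cg _);
  by rewrite ?subsetUl ?subsetUr.
rewrite -(SS_Th (SS a :|: SS b)); apply: SS_mono; apply: Cg_min; first exact: Th_con.
rewrite subUset; apply/andP; split.
  by rewrite {1}(con_Th ca); apply: Th_mono; rewrite subsetUl.
by rewrite {1}(con_Th cb); apply: Th_mono; rewrite subsetUr.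
Qed.

Lemma SS_zero : SS (con_zero K) = set0.
Proof.
apply/eqP; rewrite -subset0 -(SS_Th set0); apply: SS_mono; apply: Cg_min.
  exact: Th_con.
by rewrite sub0set.
Qed.

Lemma SS_inj : {in ConC K &, injective SS}.
Proof.
by move=> a b /ConC_con ca /ConC_con cb e; rewrite (con_Th ca) (con_Th cb) e.
Qed.

Lemma Th_ConC (S : {set lab P}) : Th S \in ConC K.
Proof. exact/con_ConC/Th_con. Qed.

End BCP.

Section Nat.
Context {d : Order.disp_t} {K : finLatticeType d} {d' : Order.disp_t} {L : finLatticeType d'}.
Variables (P : bcp K) (Q : bcp L) (g : K -> L).
Hypothesis gM : forall x y, g (Order.meet x y) = Order.meet (g x) (g y).
Hypothesis gJ : forall x y, g (Order.join x y) = Order.join (g x) (g y).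
Local Notation rlP := (@rl _ _ P).
Local Notation rlQ := (@rl _ _ Q).
Definition hh (k : lab P) : {set lab Q} := [set j | ~~ rlQ j (g (uu k)) (g (vv k))].
Hypothesis N1 : forall x y j, ~~ rlQ j (g x) (g y) ->
  exists2 k, ~~ rlP k x y & ~~ rlQ j (g (uu k)) (g (vv k)).

Lemma SS_nat a : a \in ConC K ->
  SS Q (Cg (img g a)) = \bigcup_(k in SS P a) hh k.
Proof.
move=> /ConC_con ca; set S := SS P a.
apply/eqP; rewrite eqEsubset; apply/andP; split.
  rewrite -(@SS_Th _ _ Q (\bigcup_(k in S) hh k)); apply: SS_mono; apply: Cg_min; first exact: Th_con.
  apply/subsetP=> q /imsetP [[x y] /= xy ->]; apply/ThP=> j jS.
  apply/negPn/negP=> /N1 [k nk hk]; move: jS; apply/negP; rewrite negbK.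
  apply/bigcupP; exists k; last by rewrite inE.
  move: xy; rewrite (con_Th P ca) => /ThP H; apply/negPn/negP => /H; exact/negP.
apply/subsetP=> j /bigcupP [k kS]; rewrite !inE => nj.
apply: (@bcpB3 _ _ Q _ (Cg_con (img g a)) (g (uu k)) (g (vv k)) j _ nj); apply: (subsetP (sub_Cg _)).
by apply/imsetP; exists (uu k, vv k) => //; move: kS; rewrite inE.
Qed.
End Nat.

Section Prod.
Context {dA dB : Order.disp_t} {A : finLatticeType dA} {B : finLatticeType dB}.
Variables (PA : bcp A) (PB : bcp B).
Local Notation K := (A *p B)%type.

Lemma meetP2 (x y : K) : Order.meet x y = (Order.meet x.1 y.1, Order.meet x.2 y.2) :> K.
Proof. by []. Qed.
Lemma joinP2 (x y : K) : Order.join x y = (Order.join x.1 y.1, Order.join x.2 y.2) :> K.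
Proof. by []. Qed.

Definition prl (k : (lab PA + lab PB)%type) (x y : K) : bool :=
  match k with inl k => rl k x.1 y.1 | inr k => rl k x.2 y.2 end.
Definition puu (k : (lab PA + lab PB)%type) : K :=
  match k with inl k => (uu k, bt PB) | inr k => (bt PA, uu k) end.
Definition pvv (k : (lab PA + lab PB)%type) : K :=
  match k with inl k => (vv k, bt PB) | inr k => (bt PA, vv k) end.
Definition plabs : seq (lab PA + lab PB)%type := map inl (labs PA) ++ map inr (labs PB).

Lemma plabsP k : k \in plabs.
Proof. by case: k => k; rewrite mem_cat ?map_f ?labsP ?orbT. Qed.

Lemma meet_tp {d0} {T : finLatticeType d0} (P : bcp T) x : Order.meet x (tp P) = x.
Proof. by rewrite -(tp_join P x) joinC joinKI. Qed.
Lemma join_bt {d0} {T : finLatticeType d0} (P : bcp T) x : Order.join x (bt P) = x.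
Proof. by rewrite -(bt_meet P x) meetC meetKU. Qed.

Lemma proj_con (th : {set K * K}) : CON th ->
  CON [set p : A * A | (((p.1, bt PB) : K), ((p.2, bt PB) : K)) \in th] /\
  CON [set p : B * B | (((bt PA, p.1) : K), ((bt PA, p.2) : K)) \in th].
Proof.
case=> r s t c; split; split.
- by move=> x; rewrite inE r.
- by move=> x y; rewrite !inE; apply: s.
- by move=> x y z; rewrite !inE; apply: t.
- move=> a b c' e; rewrite !inE => H1 H2; have [M J] := c _ _ _ _ H1 H2.
  by move: M J; rewrite !meetP2 !joinP2 /= !bt_meet !joinxx.
- by move=> x; rewrite inE r.
- by move=> x y; rewrite !inE; apply: s.
- by move=> x y z; rewrite !inE; apply: t.
- move=> a b c' e; rewrite !inE => H1 H2; have [M J] := c _ _ _ _ H1 H2.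
  by move: M J; rewrite !meetP2 !joinP2 /= !bt_meet !joinxx.
Qed.

Lemma prodB3 th : CON th -> forall x y k, (x, y) \in th -> ~~ prl k x y -> (puu k, pvv k) \in th.
Proof.
move=> cth x y k xy; have [cA cB] := proj_con cth.
case: k => k /= nk.
  have := @bcpB3 _ _ PA _ cA x.1 y.1 k; rewrite !inE /=; apply => //.
  have := CON_meet ((tp PA, bt PB) : K) cth xy.
  by rewrite !meetP2 /= !meet_tp ![Order.meet _ (bt PB)]meetC !bt_meet.
have := @bcpB3 _ _ PB _ cB x.2 y.2 k; rewrite !inE /=; apply => //.
have := CON_meet ((bt PA, tp PB) : K) cth xy.
by rewrite !meetP2 /= !meet_tp ![Order.meet _ (bt PA)]meetC !bt_meet.
Qed.

Lemma prodB4 th : CON th -> forall x y,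
  (forall k, ~~ prl k x y -> (puu k, pvv k) \in th) -> (x, y) \in th.
Proof.
move=> cth x y H; have [cA cB] := proj_con cth.
have HA : (x.1, y.1) \in [set p : A * A | (((p.1, bt PB) : K), ((p.2, bt PB) : K)) \in th].
  by apply: (bcpB4 cA) => k nk; rewrite inE; apply: (H (inl k)).
have HB : (x.2, y.2) \in [set p : B * B | (((bt PA, p.1) : K), ((bt PA, p.2) : K)) \in th].
  by apply: (bcpB4 cB) => k nk; rewrite inE; apply: (H (inr k)).
rewrite !inE /= in HA HB.
case: cth => r s t c.
have E1 := CON_join ((bt PA, x.2) : K) (And4 r s t c) HA.
have E2 := CON_join ((y.1, bt PB) : K) (And4 r s t c) HB.
move: E1 E2; rewrite !joinP2 /= !join_bt ![Order.join (bt _) _]joinC !join_bt => E1 E2.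
by move: (t _ _ _ E1 E2); rewrite -!surjective_pairing.
Qed.

Lemma prl_refl k x : prl k x x. Proof. by case: k => k; apply: rl_refl. Qed.
Lemma prl_sym k x y : prl k x y -> prl k y x. Proof. by case: k => k; apply: rl_sym. Qed.
Lemma prl_trans k x y z : prl k x y -> prl k y z -> prl k x z.
Proof. by case: k => k; apply: rl_trans. Qed.
Lemma prl_meet k x y z : prl k x y -> prl k (Order.meet x z) (Order.meet y z).
Proof. by case: k => k; rewrite !meetP2 /=; apply: rl_meet. Qed.
Lemma prl_join k x y z : prl k x y -> prl k (Order.join x z) (Order.join y z).
Proof. by case: k => k; rewrite !joinP2 /=; apply: rl_join. Qed.
Lemma prl_uv k j : prl j (puu k) (pvv k) = (j != k).
Proof. by case: k => k; case: j => j //=; rewrite ?rl_uv ?rl_refl. Qed.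
Lemma pbt_meet x : Order.meet ((bt PA, bt PB) : K) x = (bt PA, bt PB).
Proof. by rewrite meetP2 /= !bt_meet. Qed.
Lemma ptp_join x : Order.join ((tp PA, tp PB) : K) x = (tp PA, tp PB).
Proof. by rewrite joinP2 /= !tp_join. Qed.

Definition pbcp : bcp K := @BCP _ K _ plabs plabsP prl puu pvv (bt PA, bt PB) (tp PA, tp PB)
  prl_refl prl_sym prl_trans prl_meet prl_join prl_uv prodB3 prodB4 pbt_meet ptp_join.
End Prod.

Inductive instr := ISym of nat | ITrans of nat & nat | IMeet of nat & nat | IJoin of nat & nat.

Section Deriv.
Context {d : Order.disp_t} {K : finLatticeType d}.
Variables (x0 : K) (U : seq K).

Definition app1 (L : seq (K * K)) (i : instr) : K * K :=
  match i with
  | ISym a => let p := nth (x0, x0) L a in (p.2, p.1)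
  | ITrans a b => let p := nth (x0, x0) L a in let q := nth (x0, x0) L b in
                  if p.2 == q.1 then (p.1, q.2) else (x0, x0)
  | IMeet a z => let p := nth (x0, x0) L a in let w := nth x0 U z in
                 (Order.meet p.1 w, Order.meet p.2 w)
  | IJoin a z => let p := nth (x0, x0) L a in let w := nth x0 U z in
                 (Order.join p.1 w, Order.join p.2 w)
  end.

Fixpoint run (L : seq (K * K)) (ins : seq instr) : seq (K * K) :=
  if ins is i :: r then run (rcons L (app1 L i)) r else L.

Lemma run_sound th : CON th -> forall ins L, (forall p, p \in L -> p \in th) ->
  forall p, p \in run L ins -> p \in th.
Proof.
move=> cth; elim=> [|i r IH] L HL //=; apply: IH => p; rewrite mem_rcons inE.
case/orP=> [/eqP ->|/HL //].
have Hn : forall a, nth (x0, x0) L a \in th.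
  move=> a; case: (ltnP a (size L)) => ha; first by apply/HL/mem_nth.
  by rewrite nth_default //; case: cth.
case: cth => r' s t c.
case: i => [a|a b|a z|a z] /=.
- by have := Hn a; case: (nth _ L a) => ??; apply: s.
- case: ifP => [/eqP e|_]; last exact: r'.
  have := Hn a; have := Hn b; case: (nth _ L a) e => ?? /= ->; case: (nth _ L b) => ?? /=.
  by move=> h1 h2; apply: t h2 h1.
- by move: (Hn a); case: (nth _ L a) => p1 p2 h /=; apply: (CON_meet _ (And4 r' s t c) h).
- by move: (Hn a); case: (nth _ L a) => p1 p2 h /=; apply: (CON_join _ (And4 r' s t c) h).
Qed.
End Deriv.

Section Base.
Context {d : Order.disp_t} {K : finLatticeType d}.
Variables (U : seq K) (UP : forall x, x \in U) (x0 : K).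
Variables (lb : finType) (lbs : seq lb) (lbsP : forall k, k \in lbs).
Variables (r : lb -> rel K) (u v : lb -> K) (b t : K).
Variables (c3 : K -> K -> lb -> seq instr) (c4 : K -> K -> seq instr).

Definition seeds x y := [seq (u k, v k) | k <- lbs & ~~ r k x y].

Definition bchk1 := all (fun k => all (fun x => r k x x) U) lbs.
Definition bchk2 := all (fun k => all (fun x => all (fun y => r k x y ==> r k y x) U) U) lbs.
Definition bchk3 := all (fun k => all (fun x => all (fun y => all (fun z =>
   r k x y && r k y z ==> r k x z) U) U) U) lbs.
Definition bchk4 := all (fun k => all (fun x => all (fun y => all (fun z =>
   r k x y ==> r k (Order.meet x z) (Order.meet y z) && r k (Order.join x z) (Order.join y z)) U) U) U) lbs.
Definition bchk5 := all (fun k => all (fun j => r j (u k) (v k) == (j != k)) lbs) lbs.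
Definition bchk6 := all (fun x => all (fun y => all (fun k =>
   ~~ r k x y ==> ((u k, v k) \in run x0 U [:: (x, y)] (c3 x y k))) lbs) U) U.
Definition bchk7 := all (fun x => all (fun y => (x, y) \in run x0 U (seeds x y) (c4 x y)) U) U.
Definition bchk8 := all (fun x => (Order.meet b x == b) && (Order.join t x == t)) U.

Hypotheses (h1 : bchk1) (h2 : bchk2) (h3 : bchk3) (h4 : bchk4) (h5 : bchk5)
  (h6 : bchk6) (h7 : bchk7) (h8 : bchk8).

Let AU (P : K -> bool) : all P U -> forall x, P x.
Proof. by move/allP=> H x; apply: H. Qed.
Let AL (P : lb -> bool) : all P lbs -> forall x, P x.
Proof. by move/allP=> H x; apply: H. Qed.

Lemma b_refl k x : r k x x. Proof. exact: AU (AL h1 k) x. Qed.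
Lemma b_sym k x y : r k x y -> r k y x. Proof. exact/implyP/(AU (AU (AL h2 k) x) y). Qed.
Lemma b_trans k x y z : r k x y -> r k y z -> r k x z.
Proof. by move=> a c; apply: (implyP (AU (AU (AU (AL h3 k) x) y) z)); rewrite a c. Qed.
Lemma b_meet k x y z : r k x y -> r k (Order.meet x z) (Order.meet y z).
Proof. by move=> a; have := implyP (AU (AU (AU (AL h4 k) x) y) z) a => /andP []. Qed.
Lemma b_join k x y z : r k x y -> r k (Order.join x z) (Order.join y z).
Proof. by move=> a; have := implyP (AU (AU (AU (AL h4 k) x) y) z) a => /andP []. Qed.
Lemma b_uv k j : r j (u k) (v k) = (j != k). Proof. exact/eqP/(AL (AL h5 k) j). Qed.
Lemma b_B3 th : CON th -> forall x y k, (x, y) \in th -> ~~ r k x y -> (u k, v k) \in th.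
Proof.
move=> cth x y k xy nk; have := implyP (AL (AU (AU h6 x) y) k) nk.
by apply: (run_sound cth) => p; rewrite inE => /eqP ->.
Qed.
Lemma b_B4 th : CON th -> forall x y, (forall k, ~~ r k x y -> (u k, v k) \in th) -> (x, y) \in th.
Proof.
move=> cth x y H; have := AU (AU h7 x) y; apply: (run_sound cth) => p.
by case/mapP=> k; rewrite mem_filter => /andP [nk _] ->; apply: H.
Qed.
Lemma b_bt x : Order.meet b x = b. Proof. by have /andP [/eqP] := AU h8 x. Qed.
Lemma b_tp x : Order.join t x = t. Proof. by have /andP [_ /eqP] := AU h8 x. Qed.

Definition mkbase : bcp K := @BCP _ K lb lbs lbsP r u v b t b_refl b_sym b_trans b_meet b_join
  b_uv b_B3 b_B4 b_bt b_tp.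
End Base.


Definition ords2 : seq 'I_2 := [:: @Ordinal 2 0 erefl; @Ordinal 2 1 erefl].
Definition ords3 : seq 'I_3 := [:: @Ordinal 3 0 erefl; @Ordinal 3 1 erefl; @Ordinal 3 2 erefl].
Definition ords4 : seq 'I_4 := [:: @Ordinal 4 0 erefl; @Ordinal 4 1 erefl; @Ordinal 4 2 erefl;
   @Ordinal 4 3 erefl].
Definition ords5 : seq 'I_5 := [:: @Ordinal 5 0 erefl; @Ordinal 5 1 erefl; @Ordinal 5 2 erefl;
   @Ordinal 5 3 erefl; @Ordinal 5 4 erefl].
Definition ords7 : seq 'I_7 := [:: @Ordinal 7 0 erefl; @Ordinal 7 1 erefl; @Ordinal 7 2 erefl;
   @Ordinal 7 3 erefl; @Ordinal 7 4 erefl; @Ordinal 7 5 erefl; @Ordinal 7 6 erefl].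
Lemma ords2P x : x \in ords2. Proof. by case: x => [[|[|m]] H]. Qed.
Lemma ords3P x : x \in ords3. Proof. by case: x => [[|[|[|m]]] H]. Qed.
Lemma ords4P x : x \in ords4. Proof. by case: x => [[|[|[|[|m]]]] H]. Qed.
Lemma ords5P x : x \in ords5. Proof. by case: x => [[|[|[|[|[|m]]]]] H]. Qed.
Lemma ords7P x : x \in ords7. Proof. by case: x => [[|[|[|[|[|[|[|m]]]]]]] H]. Qed.
Lemma boolsP (x : bool) : x \in [:: false; true]. Proof. by case: x. Qed.
Lemma unitsP (x : unit) : x \in [:: tt]. Proof. by case: x. Qed.

Definition le7n (x y : nat) : bool :=
  [|| x == 0%N, y == 6%N, x == y | (x == 1%N) && ((y == 2%N) || (y == 3%N))].
Definition m7n (x y : nat) : nat :=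
  if le7n x y then x else if le7n y x then y
  else if ((x == 2%N) && (y == 3%N)) || ((x == 3%N) && (y == 2%N)) then 1%N else 0%N.
Definition j7n (x y : nat) : nat :=
  if le7n x y then y else if le7n y x then x else 6%N.

Definition N7 := 'I_7.
HB.instance Definition _ := Finite.on N7.
Definition o7 (i : nat) : N7 := nth (@Ordinal 7 0 erefl) ords7 i.
Definition le7 (x y : N7) := le7n x y.
Definition m7 (x y : N7) : N7 := o7 (m7n x y).
Definition j7 (x y : N7) : N7 := o7 (j7n x y).

Lemma A7 (P : N7 -> bool) : all P ords7 -> forall x, P x.
Proof. by move/allP=> H x; apply/H/ords7P. Qed.

Lemma le7_refl : reflexive le7.
Proof. by move=> x; rewrite /le7 /le7n eqxx !orbT. Qed.
Lemma le7_anti : antisymmetric le7.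
Proof.
have H : all (fun x => all (fun y => (le7 x y && le7 y x) ==> (x == y)) ords7) ords7 by vm_compute.
by move=> x y /(implyP (A7 (A7 H x) y)) /eqP.
Qed.
Lemma le7_trans : transitive le7.
Proof.
have H : all (fun x => all (fun y => all (fun z => (le7 y x && le7 x z) ==> le7 y z) ords7) ords7) ords7
  by vm_compute.
by move=> x y z a b; apply: (implyP (A7 (A7 (A7 H x) y) z)); rewrite a b.
Qed.
Fact N7_display : Order.disp_t. Proof. exact: Order.Disp tt tt. Qed.
HB.instance Definition _ := Order.Le_isPOrder.Build N7_display N7 le7_refl le7_anti le7_trans.
Lemma m7P (x y z : N7) : (x <= m7 y z)%O = (x <= y)%O && (x <= z)%O.
Proof.
have H : all (fun x => all (fun y => all (fun z => le7 x (m7 y z) == le7 x y && le7 x z) ords7) ords7) ords7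
  by vm_compute.
exact/eqP/(A7 (A7 (A7 H x) y) z).
Qed.
Lemma j7P (x y z : N7) : (j7 x y <= z)%O = (x <= z)%O && (y <= z)%O.
Proof.
have H : all (fun x => all (fun y => all (fun z => le7 (j7 x y) z == le7 x z && le7 y z) ords7) ords7) ords7
  by vm_compute.
exact/eqP/(A7 (A7 (A7 H x) y) z).
Qed.
HB.instance Definition _ := Order.POrder_MeetJoin_isLattice.Build N7_display N7 m7P j7P.
Definition N7L : finLatticeType _ := N7.
Definition Bo_t3 : seq (seq (seq (seq instr))) := [:: [:: [:: [::]]; [:: [::]]]; [:: [:: [:: ISym 999; ISym 0]]; [:: [::]]]].
Definition Bo_t4 : seq (seq (seq instr)) := [:: [:: [:: ISym 999]; [::]]; [:: [:: ISym 999; ISym 0]; [:: ISym 999; IJoin 0 1]]].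
Definition C3_t3 : seq (seq (seq (seq instr))) := [:: [:: [:: [::]; [::]]; [:: [::]; [::]]; [:: [:: ISym 999; ISym 0; IMeet 0 1]; [:: ISym 999; ISym 0; IMeet 0 1; IJoin 0 1]]]; [:: [:: [:: ISym 999; ISym 0]; [::]]; [:: [::]; [::]]; [:: [::]; [::]]]; [:: [:: [:: ISym 999; ISym 0; IMeet 0 1; IJoin 0 1; IJoin 0 2; IJoin 1 1; IMeet 2 1]; [:: ISym 999; ISym 0; IMeet 0 1; IJoin 0 1; IJoin 0 2; IJoin 1 1; IMeet 2 1; IJoin 2 1]]; [:: [::]; [:: ISym 999; ISym 0]]; [:: [::]; [::]]]].
Definition C3_t4 : seq (seq (seq instr)) := [:: [:: [:: ISym 999]; [::]; [:: ISym 999; ISym 0; IJoin 0 1; IJoin 0 2; ITrans 0 1]]; [:: [:: ISym 999; ISym 0]; [:: ISym 999; IJoin 0 1]; [::]]; [:: [:: ISym 999; ISym 0; IJoin 0 1; IJoin 0 2; ITrans 0 1; ISym 1; ITrans 7 3]; [:: ISym 999; ISym 0]; [:: ISym 999; IJoin 0 1; IJoin 0 2]]].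
Definition C4_t3 : seq (seq (seq (seq instr))) := [:: [:: [:: [::]; [::]; [::]]; [:: [::]; [::]; [::]]; [:: [:: ISym 999; ISym 0; IMeet 0 1]; [:: ISym 999; ISym 0; IMeet 0 1; IJoin 0 1]; [::]]; [:: [:: ISym 999; ISym 0; IMeet 0 1]; [:: ISym 999; ISym 0; IMeet 0 1; IMeet 0 2; IJoin 0 1; IJoin 0 2; IJoin 0 3; IJoin 1 1; IJoin 1 2; IMeet 2 1; IMeet 2 2; IJoin 2 1; IJoin 2 2; IJoin 4 1]; [:: ISym 999; ISym 0; IMeet 0 1; IMeet 0 2; IJoin 0 1; IJoin 0 2]]]; [:: [:: [:: ISym 999; ISym 0]; [::]; [::]]; [:: [::]; [::]; [::]]; [:: [::]; [::]; [::]]; [:: [::]; [:: ISym 999; ISym 0; IMeet 0 1; IMeet 0 2]; [:: ISym 999; ISym 0; IMeet 0 1; IMeet 0 2; IJoin 0 2]]]; [:: [:: [:: ISym 999; ISym 0; IMeet 0 1; IJoin 0 1; IJoin 0 2; IJoin 0 3; IJoin 1 1; IMeet 2 1]; [:: ISym 999; ISym 0; IMeet 0 1; IJoin 0 1; IJoin 0 2; IJoin 0 3; IJoin 1 1; IMeet 2 1; IJoin 2 1]; [::]]; [:: [::]; [:: ISym 999; ISym 0]; [::]]; [:: [::]; [::]; [::]]; [:: [::]; [::]; [::]]]; [:: [:: [:: ISym 999; ISym 0; IMeet 0 1; IMeet 0 2; IJoin 0 1; IJoin 0 2; IJoin 0 3; IJoin 1 1; IJoin 1 2; IMeet 2 1];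 [:: ISym 999; ISym 0; IMeet 0 1; IMeet 0 2; IJoin 0 1; IJoin 0 2; IJoin 0 3; IJoin 1 1; IJoin 1 2; IMeet 2 1; IMeet 2 2; IJoin 2 1; IJoin 2 2; IJoin 4 1; ITrans 3 11]; [:: ISym 999; ISym 0; IMeet 0 1; IMeet 0 2; IJoin 0 1; IJoin 0 2; IJoin 0 3; IJoin 1 1; IJoin 1 2; IMeet 2 1; IMeet 2 2; IJoin 2 1; IJoin 2 2]]; [:: [::]; [:: ISym 999; ISym 0; IMeet 0 1; IMeet 0 2; IJoin 0 2; IJoin 0 3; IJoin 1 2; IMeet 2 2]; [:: ISym 999; ISym 0; IMeet 0 1; IMeet 0 2; IJoin 0 2; IJoin 0 3; IJoin 1 2; IMeet 2 2; IJoin 2 2]]; [:: [::]; [::]; [:: ISym 999; ISym 0]]; [:: [::]; [::]; [::]]]].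
Definition C4_t4 : seq (seq (seq instr)) := [:: [:: [:: ISym 999]; [::]; [:: ISym 999; ISym 0; IJoin 0 1; IJoin 0 2; IJoin 0 3; ITrans 0 1]; [:: ISym 999; ISym 0; IJoin 0 1; IJoin 0 2; IJoin 0 3; ITrans 0 1; ISym 1; ITrans 1 2; ISym 2; ITrans 0 10]]; [:: [:: ISym 999; ISym 0]; [:: ISym 999; IJoin 0 1]; [::]; [:: ISym 999; ISym 0; IMeet 0 1; IJoin 0 2; IJoin 0 3; ITrans 0 1]]; [:: [:: ISym 999; ISym 0; IJoin 0 1; IJoin 0 2; IJoin 0 3; ITrans 0 1; ISym 1; ITrans 8 3]; [:: ISym 999; ISym 0]; [:: ISym 999; IJoin 0 1; IJoin 0 2]; [::]]; [:: [:: ISym 999; ISym 0; IJoin 0 1; IJoin 0 2; IJoin 0 3; ITrans 0 1; ISym 1; ITrans 1 2; ISym 2; ITrans 0 10; ITrans 9 4; ITrans 11 9; ITrans 14 4]; [:: ISym 999; ISym 0; IMeet 0 1; IJoin 0 2; IJoin 0 3; ITrans 0 1; ISym 1; ITrans 8 3]; [:: ISym 999; ISym 0]; [:: ISym 999; IJoin 0 1; IJoin 0 2; IJoin 0 3]]].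
Definition N7_t3 : seq (seq (seq (seq instr))) := [:: [:: [:: [::]]; [:: [:: ISym 999; ISym 0; IJoin 0 1; IJoin 0 2; IJoin 0 3; IJoin 0 4; IJoin 0 5; IJoin 0 6; IJoin 1 4; IJoin 1 5; IJoin 2 4; IJoin 2 5; IMeet 6 2; IMeet 6 3; IMeet 6 5; IMeet 7 4; ITrans 2 13; ITrans 2 14; ITrans 2 15; ITrans 2 16; ITrans 6 12; ITrans 16 6]]; [:: [:: ISym 999; ISym 0; IMeet 0 1; IJoin 0 1; IJoin 0 2; IJoin 0 3; IJoin 0 4; IJoin 0 5; IJoin 0 6; IJoin 1 1; IJoin 1 3; IJoin 1 4; IJoin 1 5; IMeet 2 1; IJoin 2 1; IJoin 2 3; IJoin 2 4; IJoin 2 5; IMeet 6 4; IMeet 6 5; IMeet 7 3; ITrans 2 19; ITrans 2 20; ITrans 2 21; ITrans 6 17; ITrans 6 18; ITrans 21 6]]; [:: [:: ISym 999; ISym 0; IMeet 0 1; IJoin 0 1; IJoin 0 2; IJoin 0 3; IJoin 0 4; IJoin 0 5; IJoin 0 6; IJoin 1 1; IJoin 1 2; IJoin 1 4; IJoin 1 5; IMeet 2 1; IJoin 2 1; IJoin 2 2; IJoin 2 4; IJoin 2 5; IMeet 5 4; IMeet 5 5; IMeet 7 2; ITrans 2 19; ITrans 2 20; ITrans 2 21; ITrans 5 17; ITrans 5 18; ITrans 21 5]]; [:: [:: ISym 999; ISym 0; IJoin 0 1; IJoin 0 2; IJoin 0 3; IJoin 0 4; IJoin 0 5; IJoin 0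 6; IJoin 1 1; IJoin 1 2; IJoin 1 3; IJoin 1 5; IJoin 2 1; IJoin 2 2; IJoin 2 3; IJoin 2 5; IMeet 3 2; IMeet 3 3; IMeet 3 5; IMeet 7 1; IMeet 7 2; IMeet 7 3; ITrans 2 19; ITrans 2 20; ITrans 2 21; ITrans 2 22; ITrans 3 16; ITrans 20 3]]; [:: [:: ISym 999; ISym 0; IJoin 0 1; IJoin 0 2; IJoin 0 3; IJoin 0 4; IJoin 0 5; IJoin 0 6; IJoin 1 1; IJoin 1 2; IJoin 1 3; IJoin 1 4; IJoin 2 1; IJoin 2 2; IJoin 2 3; IJoin 2 4; IMeet 3 2; IMeet 3 3; IMeet 3 4; IMeet 6 1; IMeet 6 2; IMeet 6 3; ITrans 2 19; ITrans 2 20; ITrans 2 21; ITrans 2 22; ITrans 3 16; ITrans 20 3]]; [:: [::]]]; [:: [:: [:: ISym 999; ISym 0; IJoin 0 1; IJoin 0 2; IJoin 0 3; IJoin 0 4; IJoin 0 5; IJoin 0 6; IJoin 1 4; IJoin 1 5; IJoin 2 4; IJoin 2 5; IMeet 6 2; IMeet 6 3; IMeet 6 5; IMeet 7 4; ITrans 13 2; ITrans 14 2; ITrans 15 2; ITrans 16 2; ITrans 6 16; ITrans 12 6; ITrans 11 7; IMeet 11 2; IMeet 11 3; IMeet 11 5; IMeet 12 4; IJoin 13 3; IJoin 14 2; IJoin 15 1; ITrans 0 24; ITrans 0 25; ITrans 0 26; ITrans 0 27; ITrans 11 28; ITrans 11 29; ITrans 27 11]]; [:: [::]]; [:: [:: ISym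 999; ISym 0; IMeet 0 1; IJoin 0 2; IJoin 0 3; IJoin 0 4; IJoin 1 3; IJoin 1 4; IJoin 1 5; IJoin 2 3; IMeet 5 4; IMeet 5 5; IMeet 10 4; IMeet 10 5; IJoin 11 1; IJoin 11 2; IJoin 11 5; IJoin 12 4; ITrans 15 10; ITrans 16 10; ITrans 17 10; ITrans 18 10; ITrans 11 18]]; [:: [:: ISym 999; ISym 0; IMeet 0 1; IJoin 0 2; IJoin 0 3; IJoin 0 4; IJoin 1 2; IJoin 1 4; IJoin 1 5; IJoin 2 2; IMeet 4 4; IMeet 4 5; IMeet 10 4; IMeet 10 5; IJoin 11 1; IJoin 11 3; IJoin 11 5; IJoin 12 4; ITrans 15 10; ITrans 16 10; ITrans 17 10; ITrans 18 10; ITrans 11 18]]; [:: [:: ISym 999; ISym 0; IMeet 0 1; IMeet 0 4; IJoin 0 1; IJoin 0 2; IJoin 0 3; IJoin 0 4; IJoin 0 5; IJoin 1 1; IJoin 1 2; IJoin 1 3; IJoin 1 4; IJoin 1 5; IMeet 2 1; IMeet 2 4; IJoin 2 1; IJoin 2 2; IJoin 2 3; IJoin 2 4; IJoin 3 5; IJoin 4 5; IMeet 5 2; IMeet 5 3; IMeet 5 5; ITrans 6 8; ITrans 7 8; IMeet 8 2; IMeet 8 3; IMeet 8 5; ITrans 2 23; ITrans 2 24; ITrans 26 2; ITrans 27 2; ITrans 3 25; ITrans 17 3; ITrans 4 20]]; [:: [:: ISym 999; ISym 0; IMeet 0 1; IMeet 0 5; IJoin 0 1; IJoin 0 2; IJoin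 0 3; IJoin 0 4; IJoin 0 5; IJoin 1 1; IJoin 1 2; IJoin 1 3; IJoin 1 4; IJoin 1 5; IMeet 2 1; IMeet 2 5; IJoin 2 1; IJoin 2 2; IJoin 2 3; IJoin 2 5; IJoin 3 4; IJoin 4 4; IMeet 5 2; IMeet 5 3; IMeet 5 4; ITrans 6 9; ITrans 7 9; IMeet 9 2; IMeet 9 3; IMeet 9 4; ITrans 2 23; ITrans 2 24; ITrans 26 2; ITrans 27 2; ITrans 3 25; ITrans 17 3; ITrans 4 20]]; [:: [:: ISym 999; ISym 0; IMeet 0 1; IMeet 0 2; IMeet 0 3; IMeet 0 4; IMeet 0 5; IJoin 0 2; IJoin 0 3; IJoin 0 4; IJoin 1 2; IJoin 1 3; IJoin 1 4; IJoin 1 5; IMeet 2 2; IMeet 2 3; IMeet 2 4; IMeet 2 5; IJoin 2 2; IJoin 2 3; IJoin 6 5; IJoin 7 4; ITrans 21 2; ITrans 22 2; ITrans 16 4; ITrans 15 5; ITrans 6 22]]]; [:: [:: [:: ISym 999; ISym 0; IMeet 0 1; IJoin 0 1; IJoin 0 2; IJoin 0 3; IJoin 0 4; IJoin 0 5; IJoin 0 6; IJoin 1 1; IJoin 1 3; IJoin 1 4; IJoin 1 5; IMeet 2 1; IJoin 2 1; IJoin 2 3; IJoin 2 4; IJoin 2 5; IMeet 6 4; IMeet 6 5; IMeet 7 3; ITrans 19 2; ITrans 20 2; ITrans 21 2; ITrans 6 21; ITrans 17 6; ITrans 18 6; ITrans 16 7; ITrans 18 7; ITrans 16 8; ITrans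 17 8; ITrans 19 14; ITrans 20 14; ITrans 21 14; IMeet 16 4; IMeet 16 5; IMeet 17 3; IJoin 19 1; IJoin 19 2; ITrans 0 35; ITrans 0 36; ITrans 0 37; ITrans 3 35; ITrans 3 36; ITrans 3 37; ITrans 37 16]]; [:: [:: ISym 999; ISym 0; IMeet 0 1; IJoin 0 2; IJoin 0 3; IJoin 0 4; IJoin 1 3; IJoin 1 4; IJoin 1 5; IJoin 2 3; IMeet 5 4; IMeet 5 5; IMeet 10 4; IMeet 10 5; IJoin 11 1; IJoin 11 2; IJoin 11 5; IJoin 12 4; ITrans 10 15; ITrans 10 16; ITrans 10 17; ITrans 10 18; ITrans 11 14; ITrans 18 11; ITrans 12 13; IJoin 13 1; IJoin 13 2; IJoin 13 5; IJoin 14 4; IMeet 17 1; IMeet 17 2; IMeet 17 3; ITrans 26 5; ITrans 27 5; ITrans 28 5; ITrans 29 5; ITrans 13 29]]; [:: [::]]; [:: [:: ISym 999; ISym 0; IMeet 0 1; IMeet 0 2; IMeet 0 3; IJoin 0 2; IJoin 0 3; IJoin 0 4; IJoin 1 2; IJoin 1 3; IJoin 1 4; IJoin 1 5; IMeet 2 2; IMeet 2 3; IJoin 2 2; IJoin 2 3; IMeet 6 4; IMeet 6 5; IMeet 7 4; IMeet 7 5; ITrans 15 4; ITrans 5 16; IJoin 17 5; ITrans 20 17; IJoin 18 4; ITrans 19 18; IJoin 19 5; IJoin 20 4; ITrans 6 27; ITrans 6 28; ITrans 23 7; ITrans 25 7; ITrans 23 15; ITrans 25 15; ITrans 16 27;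 ITrans 16 28; ITrans 17 25]]; [:: [:: ISym 999; ISym 0; IMeet 0 1; IMeet 0 2; IMeet 0 4; IJoin 0 1; IJoin 0 3; IJoin 0 4; IJoin 1 1; IJoin 1 2; IJoin 1 3; IJoin 1 4; IJoin 1 5; IMeet 2 1; IMeet 2 2; IMeet 2 4; IJoin 2 1; IJoin 2 4; IJoin 3 5; ITrans 3 5; IJoin 4 1; IJoin 4 3; IJoin 5 1; IJoin 5 3; IJoin 5 5; IMeet 6 3; IMeet 6 5; IMeet 8 3; IMeet 8 5; ITrans 2 21; ITrans 20 2; ITrans 3 27; ITrans 4 27; ITrans 17 4; ITrans 5 18]]; [:: [:: ISym 999; ISym 0; IMeet 0 1; IMeet 0 2; IMeet 0 5; IJoin 0 1; IJoin 0 3; IJoin 0 5; IJoin 1 1; IJoin 1 2; IJoin 1 3; IJoin 1 4; IJoin 1 5; IMeet 2 1; IMeet 2 2; IMeet 2 5; IJoin 2 1; IJoin 2 5; IJoin 3 4; ITrans 3 5; IJoin 4 1; IJoin 4 3; IJoin 5 1; IJoin 5 3; IJoin 5 4; IMeet 6 3; IMeet 6 4; IMeet 8 3; IMeet 8 4; ITrans 2 21; ITrans 20 2; ITrans 3 27; ITrans 4 27; ITrans 17 4; ITrans 5 18]]; [:: [:: ISym 999; ISym 0; IMeet 0 1; IMeet 0 2; IMeet 0 3; IMeet 0 4; IMeet 0 5; IJoin 0 3; IJoin 1 3; IJoin 1 4; IJoin 1 5; IMeet 2 3; IMeet 2 4; IMeet 2 5; IJoin 6 1; IJoin 6 3; IJoin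 6 5; IJoin 7 4; ITrans 15 2; ITrans 16 2; ITrans 17 2; ITrans 18 2; ITrans 6 18]]]; [:: [:: [:: ISym 999; ISym 0; IMeet 0 1; IJoin 0 1; IJoin 0 2; IJoin 0 3; IJoin 0 4; IJoin 0 5; IJoin 0 6; IJoin 1 1; IJoin 1 2; IJoin 1 4; IJoin 1 5; IMeet 2 1; IJoin 2 1; IJoin 2 2; IJoin 2 4; IJoin 2 5; IMeet 5 4; IMeet 5 5; IMeet 7 2; ITrans 19 2; ITrans 20 2; ITrans 21 2; ITrans 5 21; ITrans 17 5; ITrans 18 5; ITrans 16 7; ITrans 18 7; ITrans 16 8; ITrans 17 8; ITrans 19 14; ITrans 20 14; ITrans 21 14; IMeet 16 4; IMeet 16 5; IMeet 17 2; IJoin 19 1; IJoin 19 3; ITrans 0 35; ITrans 0 36; ITrans 0 37; ITrans 3 35; ITrans 3 36; ITrans 3 37; ITrans 37 16]]; [:: [:: ISym 999; ISym 0; IMeet 0 1; IJoin 0 2; IJoin 0 3; IJoin 0 4; IJoin 1 2; IJoin 1 4; IJoin 1 5; IJoin 2 2; IMeet 4 4; IMeet 4 5; IMeet 10 4; IMeet 10 5; IJoin 11 1; IJoin 11 3; IJoin 11 5; IJoin 12 4; ITrans 10 15; ITrans 10 16; ITrans 10 17; ITrans 10 18; ITrans 11 14; ITrans 18 11; ITrans 12 13; IJoin 13 1; IJoin 13 3; IJoin 13 5; IJoin 14 4; IMeet 17 1; IMeet 17 2; IMeet 17 3; ITrans 26 4; ITrans 27 4; ITrans 28 4; ITrans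 29 4; ITrans 13 29]]; [:: [:: ISym 999; ISym 0; IMeet 0 1; IMeet 0 2; IMeet 0 3; IJoin 0 2; IJoin 0 3; IJoin 0 4; IJoin 1 2; IJoin 1 3; IJoin 1 4; IJoin 1 5; IMeet 2 2; IMeet 2 3; IJoin 2 2; IJoin 2 3; IMeet 6 4; IMeet 6 5; IMeet 7 4; IMeet 7 5; ITrans 4 15; ITrans 16 5; IJoin 17 5; ITrans 17 20; IJoin 18 4; ITrans 18 19; IJoin 19 5; IJoin 20 4; ITrans 27 6; ITrans 28 6; ITrans 7 23; ITrans 7 25; ITrans 15 23; ITrans 15 25; ITrans 27 16; ITrans 28 16; ITrans 25 17; ITrans 19 28]]; [:: [::]]; [:: [:: ISym 999; ISym 0; IMeet 0 1; IMeet 0 3; IMeet 0 4; IJoin 0 1; IJoin 0 2; IJoin 0 4; IJoin 1 1; IJoin 1 2; IJoin 1 3; IJoin 1 4; IJoin 1 5; IMeet 2 1; IMeet 2 3; IMeet 2 4; IJoin 2 1; IJoin 2 4; IJoin 3 5; ITrans 3 5; IJoin 4 1; IJoin 4 2; IJoin 5 1; IJoin 5 2; IJoin 5 5; IMeet 6 2; IMeet 6 5; IMeet 8 2; IMeet 8 5; ITrans 2 21; ITrans 20 2; ITrans 3 27; ITrans 4 27; ITrans 17 4; ITrans 5 18]]; [:: [:: ISym 999; ISym 0; IMeet 0 1; IMeet 0 3; IMeet 0 5; IJoin 0 1; IJoin 0 2; IJoin 0 5; IJoin 1 1; IJoin 1 2; IJoin 1 3; IJoin 1 4; IJoin 1 5;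 IMeet 2 1; IMeet 2 3; IMeet 2 5; IJoin 2 1; IJoin 2 5; IJoin 3 4; ITrans 3 5; IJoin 4 1; IJoin 4 2; IJoin 5 1; IJoin 5 2; IJoin 5 4; IMeet 6 2; IMeet 6 4; IMeet 8 2; IMeet 8 4; ITrans 2 21; ITrans 20 2; ITrans 3 27; ITrans 4 27; ITrans 17 4; ITrans 5 18]]; [:: [:: ISym 999; ISym 0; IMeet 0 1; IMeet 0 2; IMeet 0 3; IMeet 0 4; IMeet 0 5; IJoin 0 2; IJoin 1 2; IJoin 1 4; IJoin 1 5; IMeet 2 2; IMeet 2 4; IMeet 2 5; IJoin 6 1; IJoin 6 2; IJoin 6 5; IJoin 7 4; ITrans 15 2; ITrans 16 2; ITrans 17 2; ITrans 18 2; ITrans 6 18]]]; [:: [:: [:: ISym 999; ISym 0; IJoin 0 1; IJoin 0 2; IJoin 0 3; IJoin 0 4; IJoin 0 5; IJoin 0 6; IJoin 1 1; IJoin 1 2; IJoin 1 3; IJoin 1 5; IJoin 2 1; IJoin 2 2; IJoin 2 3; IJoin 2 5; IMeet 3 2; IMeet 3 3; IMeet 3 5; IMeet 7 1; IMeet 7 2; IMeet 7 3; ITrans 19 2; ITrans 20 2; ITrans 21 2; ITrans 22 2; ITrans 3 20; ITrans 16 3; ITrans 13 4; ITrans 15 4; ITrans 16 4; ITrans 13 5; ITrans 14 5; ITrans 16 5; ITrans 13 7; ITrans 14 7; ITrans 15 7; IMeet 13 5; IMeet 16 1; IMeet 16 2; IMeet 16 3; IJoin 19 4; ITrans 0 38;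 ITrans 0 39; ITrans 0 40; ITrans 0 41; ITrans 39 13]]; [:: [:: ISym 999; ISym 0; IMeet 0 1; IMeet 0 4; IJoin 0 1; IJoin 0 2; IJoin 0 3; IJoin 0 4; IJoin 0 5; IJoin 1 1; IJoin 1 2; IJoin 1 3; IJoin 1 4; IJoin 1 5; IMeet 2 1; IMeet 2 4; IJoin 2 1; IJoin 2 2; IJoin 2 3; IJoin 2 4; IJoin 3 5; IJoin 4 5; IMeet 5 2; IMeet 5 3; IMeet 5 5; ITrans 8 6; ITrans 8 7; IMeet 8 2; IMeet 8 3; IMeet 8 5; ITrans 2 26; ITrans 2 27; ITrans 23 2; ITrans 24 2; ITrans 3 17]]; [:: [:: ISym 999; ISym 0; IMeet 0 1; IMeet 0 2; IMeet 0 4; IJoin 0 1; IJoin 0 3; IJoin 0 4; IJoin 1 1; IJoin 1 2; IJoin 1 3; IJoin 1 4; IJoin 1 5; IMeet 2 1; IMeet 2 2; IMeet 2 4; IJoin 2 1; IJoin 2 4; IJoin 3 5; ITrans 5 3; IJoin 4 1; IJoin 4 3; IJoin 5 1; IJoin 5 3; IJoin 5 5; IMeet 6 3; IMeet 6 5; IMeet 8 3; IMeet 8 5; ITrans 2 20; ITrans 21 2; ITrans 27 3; ITrans 4 17]]; [:: [:: ISym 999; ISym 0; IMeet 0 1; IMeet 0 3; IMeet 0 4; IJoin 0 1; IJoin 0 2; IJoin 0 4; IJoin 1 1; IJoin 1 2; IJoin 1 3; IJoin 1 4; IJoin 1 5; IMeet 2 1; IMeet 2 3; IMeet 2 4; IJoin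 2 1; IJoin 2 4; IJoin 3 5; ITrans 5 3; IJoin 4 1; IJoin 4 2; IJoin 5 1; IJoin 5 2; IJoin 5 5; IMeet 6 2; IMeet 6 5; IMeet 8 2; IMeet 8 5; ITrans 2 20; ITrans 21 2; ITrans 27 3; ITrans 4 17]]; [:: [::]]; [:: [:: ISym 999; ISym 0; IMeet 0 4; IMeet 0 5; IJoin 0 1; IJoin 0 4; IJoin 0 5; IJoin 1 1; IJoin 1 2; IJoin 1 3; IJoin 1 4; IJoin 1 5; IMeet 2 4; IMeet 2 5; IJoin 2 4; IJoin 2 5; IJoin 3 1; IJoin 3 2; IJoin 3 3; IJoin 4 1; IJoin 4 2; IJoin 4 3; IMeet 6 1; IMeet 6 2; IMeet 6 3; IMeet 7 1; IMeet 7 2; IMeet 7 3; ITrans 3 23; ITrans 3 24; ITrans 3 25; ITrans 15 3; ITrans 4 16]]; [:: [:: ISym 999; ISym 0; IMeet 0 1; IMeet 0 2; IMeet 0 3; IMeet 0 4; IMeet 0 5; IJoin 0 1; IJoin 1 1; IJoin 1 2; IJoin 1 3; IJoin 1 5; IMeet 2 1; IMeet 2 2; IMeet 2 3; IMeet 2 5; IJoin 3 5; IJoin 4 1; IJoin 4 3; IJoin 5 1; IJoin 5 2; IJoin 7 1; ITrans 17 2; ITrans 19 2; ITrans 21 2; ITrans 22 2; ITrans 3 22]]]; [:: [:: [:: ISym 999; ISym 0; IJoin 0 1; IJoin 0 2; IJoin 0 3; IJoin 0 4; IJoin 0 5; IJoin 0 6; IJoin 1 1; IJoin 1 2; IJoin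 1 3; IJoin 1 4; IJoin 2 1; IJoin 2 2; IJoin 2 3; IJoin 2 4; IMeet 3 2; IMeet 3 3; IMeet 3 4; IMeet 6 1; IMeet 6 2; IMeet 6 3; ITrans 19 2; ITrans 20 2; ITrans 21 2; ITrans 22 2; ITrans 3 20; ITrans 16 3; ITrans 13 4; ITrans 15 4; ITrans 16 4; ITrans 13 5; ITrans 14 5; ITrans 16 5; ITrans 13 6; ITrans 14 6; ITrans 15 6; IMeet 13 4; IMeet 16 1; IMeet 16 2; IMeet 16 3; IJoin 19 5; ITrans 0 38; ITrans 0 39; ITrans 0 40; ITrans 0 41; ITrans 39 13]]; [:: [:: ISym 999; ISym 0; IMeet 0 1; IMeet 0 5; IJoin 0 1; IJoin 0 2; IJoin 0 3; IJoin 0 4; IJoin 0 5; IJoin 1 1; IJoin 1 2; IJoin 1 3; IJoin 1 4; IJoin 1 5; IMeet 2 1; IMeet 2 5; IJoin 2 1; IJoin 2 2; IJoin 2 3; IJoin 2 5; IJoin 3 4; IJoin 4 4; IMeet 5 2; IMeet 5 3; IMeet 5 4; ITrans 9 6; ITrans 9 7; IMeet 9 2; IMeet 9 3; IMeet 9 4; ITrans 2 26; ITrans 2 27; ITrans 23 2; ITrans 24 2; ITrans 3 17]]; [:: [:: ISym 999; ISym 0; IMeet 0 1; IMeet 0 2; IMeet 0 5; IJoin 0 1; IJoin 0 3; IJoin 0 5; IJoin 1 1; IJoin 1 2; IJoin 1 3; IJoin 1 4; IJoin 1 5; IMeet 2 1; IMeet 2 2; IMeet 2 5; IJoin 2 1;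 IJoin 2 5; IJoin 3 4; ITrans 5 3; IJoin 4 1; IJoin 4 3; IJoin 5 1; IJoin 5 3; IJoin 5 4; IMeet 6 3; IMeet 6 4; IMeet 8 3; IMeet 8 4; ITrans 2 20; ITrans 21 2; ITrans 27 3; ITrans 4 17]]; [:: [:: ISym 999; ISym 0; IMeet 0 1; IMeet 0 3; IMeet 0 5; IJoin 0 1; IJoin 0 2; IJoin 0 5; IJoin 1 1; IJoin 1 2; IJoin 1 3; IJoin 1 4; IJoin 1 5; IMeet 2 1; IMeet 2 3; IMeet 2 5; IJoin 2 1; IJoin 2 5; IJoin 3 4; ITrans 5 3; IJoin 4 1; IJoin 4 2; IJoin 5 1; IJoin 5 2; IJoin 5 4; IMeet 6 2; IMeet 6 4; IMeet 8 2; IMeet 8 4; ITrans 2 20; ITrans 21 2; ITrans 27 3; ITrans 4 17]]; [:: [:: ISym 999; ISym 0; IMeet 0 4; IMeet 0 5; IJoin 0 1; IJoin 0 4; IJoin 0 5; IJoin 1 1; IJoin 1 2; IJoin 1 3; IJoin 1 4; IJoin 1 5; IMeet 2 4; IMeet 2 5; IJoin 2 4; IJoin 2 5; IJoin 3 1; IJoin 3 2; IJoin 3 3; IJoin 4 1; IJoin 4 2; IJoin 4 3; IMeet 6 1; IMeet 6 2; IMeet 6 3; IMeet 7 1; IMeet 7 2; IMeet 7 3; ITrans 3 15]]; [:: [::]]; [:: [:: ISym 999; ISym 0; IMeet 0 1; IMeet 0 2; IMeet 0 3; IMeet 0 4; IMeet 0 5; IJoin 0 1; IJoin 1 1; IJoin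 1 2; IJoin 1 3; IJoin 1 4; IMeet 2 1; IMeet 2 2; IMeet 2 3; IMeet 2 4; IJoin 3 4; IJoin 4 1; IJoin 4 3; IJoin 5 1; IJoin 5 2; IJoin 6 1; ITrans 17 2; ITrans 19 2; ITrans 21 2; ITrans 22 2; ITrans 3 22]]]; [:: [:: [:: ISym 999; ISym 0]]; [:: [:: ISym 999; ISym 0; IMeet 0 1; IMeet 0 2; IMeet 0 3; IMeet 0 4; IMeet 0 5; IJoin 0 2; IJoin 0 3; IJoin 0 4; IJoin 1 2; IJoin 1 3; IJoin 1 4; IJoin 1 5; IMeet 2 2; IMeet 2 3; IMeet 2 4; IMeet 2 5; IJoin 2 2; IJoin 2 3; IJoin 6 5; IJoin 7 4; ITrans 2 21; ITrans 2 22; ITrans 4 16; ITrans 5 15; ITrans 6 18; ITrans 22 6; ITrans 7 17; IJoin 17 5; IJoin 18 4; ITrans 19 21; ITrans 19 22; ITrans 20 21; ITrans 20 22; IMeet 21 1; IMeet 21 2; IMeet 21 3; ITrans 30 0; ITrans 31 0; ITrans 30 8; ITrans 31 8; ITrans 30 9; ITrans 31 9; ITrans 17 31]]; [:: [:: ISym 999; ISym 0; IMeet 0 1; IMeet 0 2; IMeet 0 3; IMeet 0 4; IMeet 0 5; IJoin 0 3; IJoin 1 3; IJoin 1 4; IJoin 1 5; IMeet 2 3; IMeet 2 4; IMeet 2 5; IJoin 6 1; IJoin 6 3; IJoin 6 5; IJoin 7 4; ITrans 2 15; ITrans 2 16; ITrans 2 17; ITrans 2 18; ITrans 6 14; ITrans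 18 6; ITrans 7 13; IJoin 13 1; IJoin 13 3; IJoin 13 5; IJoin 14 4; IMeet 17 1; IMeet 17 2; IMeet 17 3; ITrans 26 0; ITrans 27 0; ITrans 28 0; ITrans 29 0; ITrans 13 29]]; [:: [:: ISym 999; ISym 0; IMeet 0 1; IMeet 0 2; IMeet 0 3; IMeet 0 4; IMeet 0 5; IJoin 0 2; IJoin 1 2; IJoin 1 4; IJoin 1 5; IMeet 2 2; IMeet 2 4; IMeet 2 5; IJoin 6 1; IJoin 6 2; IJoin 6 5; IJoin 7 4; ITrans 2 15; ITrans 2 16; ITrans 2 17; ITrans 2 18; ITrans 6 14; ITrans 18 6; ITrans 7 13; IJoin 13 1; IJoin 13 2; IJoin 13 5; IJoin 14 4; IMeet 17 1; IMeet 17 2; IMeet 17 3; ITrans 26 0; ITrans 27 0; ITrans 28 0; ITrans 29 0; ITrans 13 29]]; [:: [:: ISym 999; ISym 0; IMeet 0 1; IMeet 0 2; IMeet 0 3; IMeet 0 4; IMeet 0 5; IJoin 0 1; IJoin 1 1; IJoin 1 2; IJoin 1 3; IJoin 1 5; IMeet 2 1; IMeet 2 2; IMeet 2 3; IMeet 2 5; IJoin 3 5; IJoin 4 1; IJoin 4 3; IJoin 5 1; IJoin 5 2; IJoin 7 1; ITrans 2 17; ITrans 2 19; ITrans 2 21; ITrans 2 22; ITrans 3 14; ITrans 3 15; ITrans 3 16; ITrans 22 3; ITrans 4 15; ITrans 4 16; ITrans 5 14; ITrans 5 16; ITrans 7 13; ITrans 7 14; ITrans 7 15; IJoin 13 5;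 IJoin 14 3; IJoin 15 2; IJoin 16 1; IMeet 17 4; ITrans 38 0; ITrans 39 0; ITrans 40 0; ITrans 41 0; ITrans 13 41]]; [:: [:: ISym 999; ISym 0; IMeet 0 1; IMeet 0 2; IMeet 0 3; IMeet 0 4; IMeet 0 5; IJoin 0 1; IJoin 1 1; IJoin 1 2; IJoin 1 3; IJoin 1 4; IMeet 2 1; IMeet 2 2; IMeet 2 3; IMeet 2 4; IJoin 3 4; IJoin 4 1; IJoin 4 3; IJoin 5 1; IJoin 5 2; IJoin 6 1; ITrans 2 17; ITrans 2 19; ITrans 2 21; ITrans 2 22; ITrans 3 14; ITrans 3 15; ITrans 3 16; ITrans 22 3; ITrans 4 15; ITrans 4 16; ITrans 5 14; ITrans 5 16; ITrans 6 13; ITrans 6 14; ITrans 6 15; IJoin 13 4; IJoin 14 3; IJoin 15 2; IJoin 16 1; IMeet 17 5; ITrans 38 0; ITrans 39 0; ITrans 40 0; ITrans 41 0; ITrans 13 41]]; [:: [::]]]].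
Definition N7_t4 : seq (seq (seq instr)) := [:: [:: [:: ISym 999]; [:: ISym 999; ISym 0; IMeet 0 1]; [:: ISym 999; ISym 0; IMeet 0 1; IMeet 0 2]; [:: ISym 999; ISym 0; IMeet 0 1; IMeet 0 2; IMeet 0 3]; [:: ISym 999; ISym 0; IMeet 0 1; IMeet 0 2; IMeet 0 3; IMeet 0 4]; [:: ISym 999; ISym 0; IMeet 0 1; IMeet 0 2; IMeet 0 3; IMeet 0 4; IMeet 0 5]; [::]]; [:: [:: ISym 999; ISym 0; IMeet 0 1; IMeet 0 2; IMeet 0 3; IMeet 0 4; IMeet 0 5; IJoin 0 1; IJoin 0 2; IJoin 0 3; IJoin 0 4; IJoin 0 5; IJoin 0 6; IJoin 1 1; IJoin 1 2; IJoin 1 3; IJoin 1 4; IJoin 1 5; IMeet 2 1]; [:: ISym 999; IJoin 0 1]; [:: ISym 999; ISym 0; IMeet 0 1; IMeet 0 2; IMeet 0 3; IMeet 0 4; IMeet 0 5; IJoin 0 1; IJoin 0 2; IJoin 0 3; IJoin 0 4; IJoin 0 5; IJoin 0 6; IJoin 1 1; IJoin 1 2; IJoin 1 3; IJoin 1 4; IJoin 1 5; IMeet 2 1; IMeet 2 2; IMeet 2 3; IMeet 2 4; IMeet 2 5; IJoin 2 1; IJoin 2 2; IJoin 2 3; IJoin 2 4; IJoin 2 5; IJoin 4 1]; [:: ISym 999; ISym 0; IMeet 0 1; IMeet 0 2; IMeet 0 3; IMeet 0 4; IMeet 0 5; IJoin 0 1; IJoin 0 2; IJoin 0 3; IJoin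 0 4; IJoin 0 5; IJoin 0 6; IJoin 1 1; IJoin 1 2; IJoin 1 3; IJoin 1 4; IJoin 1 5; IMeet 2 1; IMeet 2 2; IMeet 2 3; IMeet 2 4; IMeet 2 5; IJoin 2 1; IJoin 2 2; IJoin 2 3; IJoin 2 4; IJoin 2 5; IJoin 4 1; IJoin 5 1]; [:: ISym 999; ISym 0; IMeet 0 1; IMeet 0 2; IMeet 0 3; IMeet 0 4; IMeet 0 5; IJoin 0 1; IJoin 0 2; IJoin 0 3; IJoin 0 4; IJoin 0 5; IJoin 0 6; IJoin 1 1; IJoin 1 2; IJoin 1 3; IJoin 1 4; IJoin 1 5; IMeet 2 1; IMeet 2 2; IMeet 2 3; IMeet 2 4; IMeet 2 5; IJoin 2 1; IJoin 2 2; IJoin 2 3; IJoin 2 4; IJoin 2 5; IJoin 4 1; IJoin 5 1; ITrans 20 3; ITrans 21 3; ITrans 22 3; ITrans 23 3; ITrans 21 4; ITrans 22 4; ITrans 23 4; ITrans 20 5; ITrans 22 5; ITrans 23 5; ITrans 19 6]; [:: ISym 999; ISym 0; IMeet 0 1; IMeet 0 2; IMeet 0 3; IMeet 0 4; IMeet 0 5; IJoin 0 1; IJoin 0 2; IJoin 0 3; IJoin 0 4; IJoin 0 5; IJoin 0 6; IJoin 1 1; IJoin 1 2; IJoin 1 3; IJoin 1 4; IJoin 1 5; IMeet 2 1; IMeet 2 2; IMeet 2 3; IMeet 2 4; IMeet 2 5; IJoin 2 1; IJoin 2 2; IJoin 2 3; IJoin 2 4; IJoin 2 5; IJoin 4 1;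 IJoin 5 1; ITrans 20 3; ITrans 21 3; ITrans 22 3; ITrans 23 3; ITrans 21 4; ITrans 22 4; ITrans 23 4; ITrans 20 5; ITrans 22 5; ITrans 23 5; ITrans 19 6; ITrans 20 6; ITrans 21 6; ITrans 23 6; ITrans 19 7]; [:: ISym 999; ISym 0; IMeet 0 1; IMeet 0 2; IMeet 0 3; IMeet 0 4; IMeet 0 5; IJoin 0 1]]; [:: [:: ISym 999; ISym 0; IMeet 0 1; IMeet 0 2; IMeet 0 3; IMeet 0 4; IMeet 0 5; IJoin 0 1; IJoin 0 2; IJoin 0 3; IJoin 0 4; IJoin 0 5; IJoin 0 6; IJoin 1 1; IJoin 1 2; IJoin 1 3; IJoin 1 4; IJoin 1 5; IMeet 2 1; IMeet 2 2]; [:: ISym 999; ISym 0; IMeet 0 1; IMeet 0 2; IMeet 0 3; IMeet 0 4; IMeet 0 5; IJoin 0 1; IJoin 0 2; IJoin 0 3; IJoin 0 4; IJoin 0 5; IJoin 0 6; IJoin 1 1; IJoin 1 2; IJoin 1 3; IJoin 1 4; IJoin 1 5; IMeet 2 1; IMeet 2 2; IMeet 2 3; IMeet 2 4; IMeet 2 5; IJoin 2 1; IJoin 2 2; IJoin 2 3; IJoin 2 4; IJoin 2 5; IJoin 4 1; IJoin 5 1; ITrans 20 3]; [:: ISym 999; IJoin 0 1; IJoin 0 2]; [:: ISym 999; ISym 0; IMeet 0 1; IMeet 0 2; IMeet 0 3; IMeet 0 4; IMeet 0 5; IJoin 0 1; IJoin 0 2; IJoin 0 3; IJoin 0 4; IJoin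 0 5; IJoin 0 6; IJoin 1 1; IJoin 1 2; IJoin 1 3; IJoin 1 4; IJoin 1 5; IMeet 2 1; IMeet 2 2; IMeet 2 3; IMeet 2 4; IMeet 2 5; IJoin 2 1; IJoin 2 2; IJoin 2 3; IJoin 2 4; IJoin 2 5; IJoin 4 1; IJoin 5 1; ITrans 20 3; ITrans 21 3; ITrans 22 3; ITrans 23 3; ITrans 21 4; ITrans 22 4; ITrans 23 4; ITrans 20 5]; [:: ISym 999; ISym 0; IMeet 0 1; IMeet 0 2; IMeet 0 3; IMeet 0 4; IMeet 0 5; IJoin 0 1; IJoin 0 2; IJoin 0 3; IJoin 0 4; IJoin 0 5; IJoin 0 6; IJoin 1 1; IJoin 1 2; IJoin 1 3; IJoin 1 4; IJoin 1 5; IMeet 2 1; IMeet 2 2; IMeet 2 3; IMeet 2 4; IMeet 2 5; IJoin 2 1; IJoin 2 2; IJoin 2 3; IJoin 2 4; IJoin 2 5; IJoin 4 1; IJoin 5 1; ITrans 20 3; ITrans 21 3; ITrans 22 3; ITrans 23 3; ITrans 21 4; ITrans 22 4; ITrans 23 4; ITrans 20 5; ITrans 22 5; ITrans 23 5; ITrans 19 6; ITrans 20 6]; [:: ISym 999; ISym 0; IMeet 0 1; IMeet 0 2; IMeet 0 3; IMeet 0 4; IMeet 0 5; IJoin 0 1; IJoin 0 2; IJoin 0 3; IJoin 0 4; IJoin 0 5; IJoin 0 6; IJoin 1 1; IJoin 1 2; IJoin 1 3; IJoin 1 4; IJoin 1 5; IMeet 2 1; IMeet 2 2; IMeet 2 3;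 IMeet 2 4; IMeet 2 5; IJoin 2 1; IJoin 2 2; IJoin 2 3; IJoin 2 4; IJoin 2 5; IJoin 4 1; IJoin 5 1; ITrans 20 3; ITrans 21 3; ITrans 22 3; ITrans 23 3; ITrans 21 4; ITrans 22 4; ITrans 23 4; ITrans 20 5; ITrans 22 5; ITrans 23 5; ITrans 19 6; ITrans 20 6; ITrans 21 6; ITrans 23 6; ITrans 19 7; ITrans 20 7]; [:: ISym 999; ISym 0; IMeet 0 1; IMeet 0 2; IMeet 0 3; IMeet 0 4; IMeet 0 5; IJoin 0 1; IJoin 0 2]]; [:: [:: ISym 999; ISym 0; IMeet 0 1; IMeet 0 2; IMeet 0 3; IMeet 0 4; IMeet 0 5; IJoin 0 1; IJoin 0 2; IJoin 0 3; IJoin 0 4; IJoin 0 5; IJoin 0 6; IJoin 1 1; IJoin 1 2; IJoin 1 3; IJoin 1 4; IJoin 1 5; IMeet 2 1; IMeet 2 2; IMeet 2 3]; [:: ISym 999; ISym 0; IMeet 0 1; IMeet 0 2; IMeet 0 3; IMeet 0 4; IMeet 0 5; IJoin 0 1; IJoin 0 2; IJoin 0 3; IJoin 0 4; IJoin 0 5; IJoin 0 6; IJoin 1 1; IJoin 1 2; IJoin 1 3; IJoin 1 4; IJoin 1 5; IMeet 2 1; IMeet 2 2; IMeet 2 3; IMeet 2 4; IMeet 2 5; IJoin 2 1; IJoin 2 2; IJoin 2 3; IJoin 2 4; IJoin 2 5; IJoin 4 1; IJoin 5 1; ITrans 20 3; ITrans 21 3]; [:: ISym 999; ISym 0; IMeet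 0 1; IMeet 0 2; IMeet 0 3; IMeet 0 4; IMeet 0 5; IJoin 0 1; IJoin 0 2; IJoin 0 3; IJoin 0 4; IJoin 0 5; IJoin 0 6; IJoin 1 1; IJoin 1 2; IJoin 1 3; IJoin 1 4; IJoin 1 5; IMeet 2 1; IMeet 2 2; IMeet 2 3; IMeet 2 4; IMeet 2 5; IJoin 2 1; IJoin 2 2; IJoin 2 3; IJoin 2 4; IJoin 2 5; IJoin 4 1; IJoin 5 1; ITrans 20 3; ITrans 21 3; ITrans 22 3; ITrans 23 3; ITrans 21 4]; [:: ISym 999; IJoin 0 1; IJoin 0 2; IJoin 0 3]; [:: ISym 999; ISym 0; IMeet 0 1; IMeet 0 2; IMeet 0 3; IMeet 0 4; IMeet 0 5; IJoin 0 1; IJoin 0 2; IJoin 0 3; IJoin 0 4; IJoin 0 5; IJoin 0 6; IJoin 1 1; IJoin 1 2; IJoin 1 3; IJoin 1 4; IJoin 1 5; IMeet 2 1; IMeet 2 2; IMeet 2 3; IMeet 2 4; IMeet 2 5; IJoin 2 1; IJoin 2 2; IJoin 2 3; IJoin 2 4; IJoin 2 5; IJoin 4 1; IJoin 5 1; ITrans 20 3; ITrans 21 3; ITrans 22 3; ITrans 23 3; ITrans 21 4; ITrans 22 4; ITrans 23 4; ITrans 20 5; ITrans 22 5; ITrans 23 5; ITrans 19 6; ITrans 20 6; ITrans 21 6]; [:: ISym 999; ISym 0; IMeet 0 1; IMeet 0 2; IMeet 0 3; IMeet 0 4; IMeet 0 5; IJoin 0 1; IJoin 0 2; IJoin 0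 3; IJoin 0 4; IJoin 0 5; IJoin 0 6; IJoin 1 1; IJoin 1 2; IJoin 1 3; IJoin 1 4; IJoin 1 5; IMeet 2 1; IMeet 2 2; IMeet 2 3; IMeet 2 4; IMeet 2 5; IJoin 2 1; IJoin 2 2; IJoin 2 3; IJoin 2 4; IJoin 2 5; IJoin 4 1; IJoin 5 1; ITrans 20 3; ITrans 21 3; ITrans 22 3; ITrans 23 3; ITrans 21 4; ITrans 22 4; ITrans 23 4; ITrans 20 5; ITrans 22 5; ITrans 23 5; ITrans 19 6; ITrans 20 6; ITrans 21 6; ITrans 23 6; ITrans 19 7; ITrans 20 7; ITrans 21 7]; [:: ISym 999; ISym 0; IMeet 0 1; IMeet 0 2; IMeet 0 3; IMeet 0 4; IMeet 0 5; IJoin 0 1; IJoin 0 2; IJoin 0 3]]; [:: [:: ISym 999; ISym 0; IMeet 0 1; IMeet 0 2; IMeet 0 3; IMeet 0 4; IMeet 0 5; IJoin 0 1; IJoin 0 2; IJoin 0 3; IJoin 0 4; IJoin 0 5; IJoin 0 6; IJoin 1 1; IJoin 1 2; IJoin 1 3; IJoin 1 4; IJoin 1 5; IMeet 2 1; IMeet 2 2; IMeet 2 3; IMeet 2 4]; [:: ISym 999; ISym 0; IMeet 0 1; IMeet 0 2; IMeet 0 3; IMeet 0 4; IMeet 0 5; IJoin 0 1; IJoin 0 2; IJoin 0 3; IJoin 0 4; IJoin 0 5; IJoin 0 6; IJoin 1 1; IJoin 1 2; IJoin 1 3; IJoin 1 4; IJoin 1 5; IMeet 2 1; IMeet 2 2;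 IMeet 2 3; IMeet 2 4; IMeet 2 5; IJoin 2 1; IJoin 2 2; IJoin 2 3; IJoin 2 4; IJoin 2 5; IJoin 4 1; IJoin 5 1; ITrans 20 3; ITrans 21 3; ITrans 22 3]; [:: ISym 999; ISym 0; IMeet 0 1; IMeet 0 2; IMeet 0 3; IMeet 0 4; IMeet 0 5; IJoin 0 1; IJoin 0 2; IJoin 0 3; IJoin 0 4; IJoin 0 5; IJoin 0 6; IJoin 1 1; IJoin 1 2; IJoin 1 3; IJoin 1 4; IJoin 1 5; IMeet 2 1; IMeet 2 2; IMeet 2 3; IMeet 2 4; IMeet 2 5; IJoin 2 1; IJoin 2 2; IJoin 2 3; IJoin 2 4; IJoin 2 5; IJoin 4 1; IJoin 5 1; ITrans 20 3; ITrans 21 3; ITrans 22 3; ITrans 23 3; ITrans 21 4; ITrans 22 4]; [:: ISym 999; ISym 0; IMeet 0 1; IMeet 0 2; IMeet 0 3; IMeet 0 4; IMeet 0 5; IJoin 0 1; IJoin 0 2; IJoin 0 3; IJoin 0 4; IJoin 0 5; IJoin 0 6; IJoin 1 1; IJoin 1 2; IJoin 1 3; IJoin 1 4; IJoin 1 5; IMeet 2 1; IMeet 2 2; IMeet 2 3; IMeet 2 4; IMeet 2 5; IJoin 2 1; IJoin 2 2; IJoin 2 3; IJoin 2 4; IJoin 2 5; IJoin 4 1; IJoin 5 1; ITrans 20 3; ITrans 21 3; ITrans 22 3; ITrans 23 3; ITrans 21 4; ITrans 22 4; ITrans 23 4; ITrans 20 5; ITrans 22 5]; [:: ISym 999; IJoin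 0 1; IJoin 0 2; IJoin 0 3; IJoin 0 4]; [:: ISym 999; ISym 0; IMeet 0 1; IMeet 0 2; IMeet 0 3; IMeet 0 4; IMeet 0 5; IJoin 0 1; IJoin 0 2; IJoin 0 3; IJoin 0 4; IJoin 0 5; IJoin 0 6; IJoin 1 1; IJoin 1 2; IJoin 1 3; IJoin 1 4; IJoin 1 5; IMeet 2 1; IMeet 2 2; IMeet 2 3; IMeet 2 4; IMeet 2 5; IJoin 2 1; IJoin 2 2; IJoin 2 3; IJoin 2 4; IJoin 2 5; IJoin 4 1; IJoin 5 1; ITrans 20 3; ITrans 21 3; ITrans 22 3; ITrans 23 3; ITrans 21 4; ITrans 22 4; ITrans 23 4; ITrans 20 5; ITrans 22 5; ITrans 23 5; ITrans 19 6; ITrans 20 6; ITrans 21 6; ITrans 23 6; ITrans 19 7; ITrans 20 7; ITrans 21 7; ITrans 22 7]; [:: ISym 999; ISym 0; IMeet 0 1; IMeet 0 2; IMeet 0 3; IMeet 0 4; IMeet 0 5; IJoin 0 1; IJoin 0 2; IJoin 0 3; IJoin 0 4]]; [:: [:: ISym 999; ISym 0; IMeet 0 1; IMeet 0 2; IMeet 0 3; IMeet 0 4; IMeet 0 5; IJoin 0 1; IJoin 0 2; IJoin 0 3; IJoin 0 4; IJoin 0 5; IJoin 0 6; IJoin 1 1; IJoin 1 2; IJoin 1 3; IJoin 1 4; IJoin 1 5; IMeet 2 1; IMeet 2 2; IMeet 2 3; IMeet 2 4; IMeet 2 5]; [:: ISym 999; ISym 0; IMeet 0 1; IMeet 0 2;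 IMeet 0 3; IMeet 0 4; IMeet 0 5; IJoin 0 1; IJoin 0 2; IJoin 0 3; IJoin 0 4; IJoin 0 5; IJoin 0 6; IJoin 1 1; IJoin 1 2; IJoin 1 3; IJoin 1 4; IJoin 1 5; IMeet 2 1; IMeet 2 2; IMeet 2 3; IMeet 2 4; IMeet 2 5; IJoin 2 1; IJoin 2 2; IJoin 2 3; IJoin 2 4; IJoin 2 5; IJoin 4 1; IJoin 5 1; ITrans 20 3; ITrans 21 3; ITrans 22 3; ITrans 23 3]; [:: ISym 999; ISym 0; IMeet 0 1; IMeet 0 2; IMeet 0 3; IMeet 0 4; IMeet 0 5; IJoin 0 1; IJoin 0 2; IJoin 0 3; IJoin 0 4; IJoin 0 5; IJoin 0 6; IJoin 1 1; IJoin 1 2; IJoin 1 3; IJoin 1 4; IJoin 1 5; IMeet 2 1; IMeet 2 2; IMeet 2 3; IMeet 2 4; IMeet 2 5; IJoin 2 1; IJoin 2 2; IJoin 2 3; IJoin 2 4; IJoin 2 5; IJoin 4 1; IJoin 5 1; ITrans 20 3; ITrans 21 3; ITrans 22 3; ITrans 23 3; ITrans 21 4; ITrans 22 4; ITrans 23 4]; [:: ISym 999; ISym 0; IMeet 0 1; IMeet 0 2; IMeet 0 3; IMeet 0 4; IMeet 0 5; IJoin 0 1; IJoin 0 2; IJoin 0 3; IJoin 0 4; IJoin 0 5; IJoin 0 6; IJoin 1 1; IJoin 1 2; IJoin 1 3; IJoin 1 4; IJoin 1 5; IMeet 2 1; IMeet 2 2; IMeet 2 3; IMeet 2 4; IMeet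 2 5; IJoin 2 1; IJoin 2 2; IJoin 2 3; IJoin 2 4; IJoin 2 5; IJoin 4 1; IJoin 5 1; ITrans 20 3; ITrans 21 3; ITrans 22 3; ITrans 23 3; ITrans 21 4; ITrans 22 4; ITrans 23 4; ITrans 20 5; ITrans 22 5; ITrans 23 5]; [:: ISym 999; ISym 0; IMeet 0 1; IMeet 0 2; IMeet 0 3; IMeet 0 4; IMeet 0 5; IJoin 0 1; IJoin 0 2; IJoin 0 3; IJoin 0 4; IJoin 0 5; IJoin 0 6; IJoin 1 1; IJoin 1 2; IJoin 1 3; IJoin 1 4; IJoin 1 5; IMeet 2 1; IMeet 2 2; IMeet 2 3; IMeet 2 4; IMeet 2 5; IJoin 2 1; IJoin 2 2; IJoin 2 3; IJoin 2 4; IJoin 2 5; IJoin 4 1; IJoin 5 1; ITrans 20 3; ITrans 21 3; ITrans 22 3; ITrans 23 3; ITrans 21 4; ITrans 22 4; ITrans 23 4; ITrans 20 5; ITrans 22 5; ITrans 23 5; ITrans 19 6; ITrans 20 6; ITrans 21 6; ITrans 23 6]; [:: ISym 999; IJoin 0 1; IJoin 0 2; IJoin 0 3; IJoin 0 4; IJoin 0 5]; [:: ISym 999; ISym 0; IMeet 0 1; IMeet 0 2; IMeet 0 3; IMeet 0 4; IMeet 0 5; IJoin 0 1; IJoin 0 2; IJoin 0 3; IJoin 0 4; IJoin 0 5]]; [:: [:: ISym 999; ISym 0]; [:: ISym 999; ISym 0; IMeet 0 1; IMeet 0 2; IMeet 0 3; IMeet 0 4; IMeet 0 5; IJoin 0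 1; IJoin 0 2; IJoin 0 3; IJoin 0 4; IJoin 0 5; IJoin 0 6; IJoin 1 1; IJoin 1 2; IJoin 1 3; IJoin 1 4; IJoin 1 5; IMeet 2 1; IMeet 2 2; IMeet 2 3; IMeet 2 4; IMeet 2 5; IJoin 2 1]; [:: ISym 999; ISym 0; IMeet 0 1; IMeet 0 2; IMeet 0 3; IMeet 0 4; IMeet 0 5; IJoin 0 1; IJoin 0 2; IJoin 0 3; IJoin 0 4; IJoin 0 5; IJoin 0 6; IJoin 1 1; IJoin 1 2; IJoin 1 3; IJoin 1 4; IJoin 1 5; IMeet 2 1; IMeet 2 2; IMeet 2 3; IMeet 2 4; IMeet 2 5; IJoin 2 1; IJoin 2 2]; [:: ISym 999; ISym 0; IMeet 0 1; IMeet 0 2; IMeet 0 3; IMeet 0 4; IMeet 0 5; IJoin 0 1; IJoin 0 2; IJoin 0 3; IJoin 0 4; IJoin 0 5; IJoin 0 6; IJoin 1 1; IJoin 1 2; IJoin 1 3; IJoin 1 4; IJoin 1 5; IMeet 2 1; IMeet 2 2; IMeet 2 3; IMeet 2 4; IMeet 2 5; IJoin 2 1; IJoin 2 2; IJoin 2 3]; [:: ISym 999; ISym 0; IMeet 0 1; IMeet 0 2; IMeet 0 3; IMeet 0 4; IMeet 0 5; IJoin 0 1; IJoin 0 2; IJoin 0 3; IJoin 0 4; IJoin 0 5; IJoin 0 6; IJoin 1 1; IJoin 1 2; IJoin 1 3; IJoin 1 4; IJoin 1 5; IMeet 2 1; IMeet 2 2; IMeet 2 3; IMeet 2 4; IMeet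 2 5; IJoin 2 1; IJoin 2 2; IJoin 2 3; IJoin 2 4]; [:: ISym 999; ISym 0; IMeet 0 1; IMeet 0 2; IMeet 0 3; IMeet 0 4; IMeet 0 5; IJoin 0 1; IJoin 0 2; IJoin 0 3; IJoin 0 4; IJoin 0 5; IJoin 0 6; IJoin 1 1; IJoin 1 2; IJoin 1 3; IJoin 1 4; IJoin 1 5; IMeet 2 1; IMeet 2 2; IMeet 2 3; IMeet 2 4; IMeet 2 5; IJoin 2 1; IJoin 2 2; IJoin 2 3; IJoin 2 4; IJoin 2 5]; [:: ISym 999; IJoin 0 1; IJoin 0 2; IJoin 0 3; IJoin 0 4; IJoin 0 5; IJoin 0 6]]].

Definition bo_r (k : unit) (x y : bool) := x == y.
Definition BoP : bcp bool.
refine (@mkbase _ bool [:: false; true] boolsP false unit [:: tt] unitsP bo_r (fun _ => false) (fun _ => true)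
  false true (fun x y k => nth [::] (nth [::] (nth [::] Bo_t3 x) y) 0)
  (fun x y => nth [::] (nth [::] Bo_t4 x) y) _ _ _ _ _ _ _ _); by vm_compute.
Defined.

Definition c3_r (k : 'I_2) (x y : 'I_3) := (x <= k)%N == (y <= k)%N.
Definition o3 (i : nat) : 'I_3 := nth (@Ordinal 3 0 erefl) ords3 i.
Definition C3P : bcp 'I_3.
refine (@mkbase _ 'I_3 ords3 ords3P (o3 0) 'I_2 ords2 ords2P c3_r (fun k => o3 k) (fun k => o3 k.+1)
  (o3 0) (o3 2) (fun x y k => nth [::] (nth [::] (nth [::] C3_t3 x) y) k)
  (fun x y => nth [::] (nth [::] C3_t4 x) y) _ _ _ _ _ _ _ _); by vm_compute.
Defined.

Definition c4_r (k : 'I_3) (x y : 'I_4) := (x <= k)%N == (y <= k)%N.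
Definition o4 (i : nat) : 'I_4 := nth (@Ordinal 4 0 erefl) ords4 i.
Definition C4P : bcp 'I_4.
refine (@mkbase _ 'I_4 ords4 ords4P (o4 0) 'I_3 ords3 ords3P c4_r (fun k => o4 k) (fun k => o4 k.+1)
  (o4 0) (o4 3) (fun x y k => nth [::] (nth [::] (nth [::] C4_t3 x) y) k)
  (fun x y => nth [::] (nth [::] C4_t4 x) y) _ _ _ _ _ _ _ _); by vm_compute.
Defined.

Definition n7_r (k : unit) (x y : N7L) := x == y.
Definition N7P : bcp N7L.
refine (@mkbase _ N7L ords7 ords7P (o7 0) unit [:: tt] unitsP n7_r (fun _ => o7 0) (fun _ => o7 6)
  (o7 0) (o7 6) (fun x y k => nth [::] (nth [::] (nth [::] N7_t3 (nat_of_ord x)) (nat_of_ord y)) 0)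
  (fun x y => nth [::] (nth [::] N7_t4 (nat_of_ord x)) (nat_of_ord y)) _ _ _ _ _ _ _ _); by vm_compute.
Defined.


Definition pl {dA dB} {A : finLatticeType dA} {B : finLatticeType dB} (UA : seq A) (UB : seq B)
  : seq (A *p B)%type := [seq ((a, b) : (A *p B)%type) | a <- UA, b <- UB].
Lemma plP {dA dB} {A : finLatticeType dA} {B : finLatticeType dB} (UA : seq A) (UB : seq B) :
  (forall x, x \in UA) -> (forall x, x \in UB) -> forall x, x \in pl UA UB.
Proof. by move=> HA HB [a b]; apply/allpairsP; exists (a, b). Qed.

Definition B4L := (bool *p (bool *p (bool *p bool)))%type.
Definition LU := (N7L *p B4L)%type.
Definition LT1 := ('I_4 *p bool)%type.
Definition B4U : seq B4L := pl [:: false; true] (pl [:: false; true] (pl [:: false; true] [:: false; true])).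
Lemma B4UP x : x \in B4U. Proof. by apply: plP => [|?]; [apply: boolsP|apply: plP => [|?]; [apply: boolsP|apply: plP; apply: boolsP]]. Qed.
Definition UU : seq LU := pl ords7 B4U.
Lemma UUP x : x \in UU. Proof. exact: plP ords7P B4UP x. Qed.
Definition T1U : seq LT1 := pl ords4 [:: false; true].
Lemma T1UP x : x \in T1U. Proof. exact: plP ords4P boolsP x. Qed.

Definition PB4 : bcp B4L := pbcp BoP (pbcp BoP (pbcp BoP BoP)).
Definition PU : bcp LU := pbcp N7P PB4.
Definition PT1 : bcp LT1 := pbcp C4P BoP.

Definition labU (j : lab PU) : nat :=
  match j with
  | inl _ => 4 | inr (inl _) => 0 | inr (inr (inl _)) => 1 | inr (inr (inr (inl _))) => 2
  | inr (inr (inr (inr _))) => 3 end.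

Record shd := SD {
  sd_d : Order.disp_t; sd_K : finLatticeType sd_d; sd_U : seq sd_K;
  sd_UP : forall x, x \in sd_U; sd_x0 : sd_K; sd_P : bcp sd_K;
  sd_lab : lab sd_P -> seq nat; sd_e : sd_K -> LU }.

Section Checks.
Variable D : shd.
Local Notation K := (sd_K D).
Local Notation U := (sd_U D).
Local Notation P := (sd_P D).
Local Notation e := (@sd_e D).
Local Notation rlU := (@rl _ _ PU).
Local Notation rlK := (@rl _ _ P).
Definition g_hom := all (fun x => all (fun y =>
  (e (Order.meet x y) == Order.meet (e x) (e y)) && (e (Order.join x y) == Order.join (e x) (e y))
  && ((e x == e y) ==> (x == y))) U) U.
Definition g_N1 := all (fun x => all (fun y => all (fun j => ~~ rlU j (e x) (e y) ==>
  has (fun k => ~~ rlK k x y && ~~ rlU j (e (uu k)) (e (vv k))) (labs P)) (labs PU)) U) U.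
Definition g_c4 := all (fun k => all (fun i : 'I_5 => (val i \in @sd_lab D k) ==
  has (fun j => ~~ rlU j (e (uu k)) (e (vv k)) && (labU j == val i)) (labs PU)) ords5) (labs P).
Definition g_priv := all (fun k => has (fun i : 'I_5 => (val i \in @sd_lab D k) &&
  all (fun k' => (k' == k) || (val i \notin @sd_lab D k')) (labs P)) ords5) (labs P).
Definition good := [&& g_hom, g_N1, g_c4 & g_priv].
End Checks.

Definition subchk (D1 D2 : shd) :=
  all (fun x => has (fun y => @sd_e D2 y == @sd_e D1 x) (sd_U D2)) (sd_U D1).

Definition mkU (n : nat) (a b c e : bool) : LU := ((o7 n, (a, (b, (c, e)))) : LU).
Definition botU := mkU 0 false false false false.
Definition topU := mkU 6 true true true true.

Definition eB (b : bool) : LU := if b then topU else botU.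
Definition eS0 (k : 'I_3) : LU :=
  match val k with 0 => botU | 1 => mkU 2 true true false false | _ => topU end.
Definition eS1 (k : 'I_3) : LU :=
  match val k with 0 => botU | 1 => mkU 4 false true true false | _ => topU end.
Definition eS2 (k : 'I_3) : LU :=
  match val k with 0 => botU | 1 => mkU 1 true false true false | _ => topU end.
Definition i0 (a b : bool) : nat := if a then (if b then 6 else 1) else (if b then 4 else 0).
Definition i2 (a b : bool) : nat := if a then (if b then 6 else 2) else (if b then 4 else 0).
Definition i1 (k : 'I_4) : nat := match val k with 0 => 0 | 1 => 1 | 2 => 2 | _ => 6 end.
Definition eT0 (t : B4L) : LU :=
  let: (t0, (t1, (t2, t3))) := t in mkU (i0 t0 t3) t0 t3 t2 t1.
Definition eT2 (t : B4L) : LU :=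
  let: (t0, (t1, (t2, t3))) := t in mkU (i2 t0 t3) t0 t1 t3 t2.
Definition eT1 (t : LT1) : LU :=
  let: (k, q) := t in mkU (i1 k) (1 <= k)%N (2 <= k)%N q (3 <= k)%N.

Definition labS0 (k : 'I_2) : seq nat := if val k == 0 then [:: 0; 1; 4] else [:: 2; 3; 4].
Definition labS1 (k : 'I_2) : seq nat := if val k == 0 then [:: 1; 2; 4] else [:: 0; 3; 4].
Definition labS2 (k : 'I_2) : seq nat := if val k == 0 then [:: 0; 2; 4] else [:: 1; 3; 4].
Definition labT0 (k : lab PB4) : seq nat :=
  match k with inl _ => [:: 0; 4] | inr (inl _) => [:: 3] | inr (inr (inl _)) => [:: 2]
  | inr (inr (inr _)) => [:: 1; 4] end.
Definition labT2 (k : lab PB4) : seq nat :=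
  match k with inl _ => [:: 0; 4] | inr (inl _) => [:: 1] | inr (inr (inl _)) => [:: 3]
  | inr (inr (inr _)) => [:: 2; 4] end.
Definition labT1 (k : lab PT1) : seq nat :=
  match k with inl k => (match val k with 0 => [:: 0; 4] | 1 => [:: 1; 4] | _ => [:: 3; 4] end)
  | inr _ => [:: 2] end.

Definition DB := @SD _ bool [:: false; true] boolsP false BoP (fun _ => [:: 0; 1; 2; 3; 4]) eB.
Definition DS0 := @SD _ 'I_3 ords3 ords3P (o3 0) C3P labS0 eS0.
Definition DS1 := @SD _ 'I_3 ords3 ords3P (o3 0) C3P labS1 eS1.
Definition DS2 := @SD _ 'I_3 ords3 ords3P (o3 0) C3P labS2 eS2.
Definition DT0 := @SD _ B4L B4U B4UP (false, (false, (false, false))) PB4 labT0 eT0.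
Definition DT1 := @SD _ LT1 T1U T1UP (o4 0, false) PT1 labT1 eT1.
Definition DT2 := @SD _ B4L B4U B4UP (false, (false, (false, false))) PB4 labT2 eT2.
Definition DU := @SD _ LU UU UUP botU PU (fun j => [:: labU j]) id.

Lemma goodB : good DB. Proof. by vm_compute. Qed.
Lemma goodS0 : good DS0. Proof. by vm_compute. Qed.
Lemma goodS1 : good DS1. Proof. by vm_compute. Qed.
Lemma goodS2 : good DS2. Proof. by vm_compute. Qed.
Lemma goodT0 : good DT0. Proof. by vm_compute. Qed.
Lemma goodT1 : good DT1. Proof. by vm_compute. Qed.
Lemma goodT2 : good DT2. Proof. by vm_compute. Qed.
Lemma privU : g_priv DU. Proof. by vm_compute. Qed.


Lemma in_s5 (i : 'I_5) l : (i \in s5 l) = (val i \in l).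
Proof. by rewrite inE. Qed.

Record goodP (D : shd) : Prop := GP {
  gp_meet : forall x y, @sd_e D (Order.meet x y) = Order.meet (@sd_e D x) (@sd_e D y);
  gp_join : forall x y, @sd_e D (Order.join x y) = Order.join (@sd_e D x) (@sd_e D y);
  gp_inj : injective (@sd_e D);
  gp_N1 : forall x y j, ~~ @rl _ _ PU j (@sd_e D x) (@sd_e D y) ->
     exists2 k, ~~ @rl _ _ (sd_P D) k x y & ~~ @rl _ _ PU j (@sd_e D (uu k)) (@sd_e D (vv k));
  gp_c4 : forall k (i : 'I_5), (val i \in @sd_lab D k) =
     has (fun j => ~~ @rl _ _ PU j (@sd_e D (uu k)) (@sd_e D (vv k)) && (labU j == val i)) (labs PU);
  gp_priv : forall k, exists i : 'I_5, (val i \in @sd_lab D k) &&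
     all (fun k' => (k' == k) || (val i \notin @sd_lab D k')) (labs (sd_P D)) }.

Lemma good_goodP D : good D -> goodP D.
Proof.
case/and4P=> /allP H1 /allP H2 /allP H3 /allP H4.
have AU : forall x, x \in sd_U D by apply: sd_UP.
split.
- move=> x y; move/allP: (H1 x (AU x)) => /(_ y (AU y)).
  by case/andP=> /andP [/eqP -> _] _.
- move=> x y; move/allP: (H1 x (AU x)) => /(_ y (AU y)).
  by case/andP=> /andP [_ /eqP ->] _.
- move=> x y e; move/allP: (H1 x (AU x)) => /(_ y (AU y)).
  by case/andP=> _ /implyP; rewrite e eqxx => /(_ isT) /eqP.
- move=> x y j nj; move/allP: (H2 x (AU x)) => /(_ y (AU y)) /allP /(_ j (labsP j)).
  move=> /implyP /(_ nj) H; case/hasP: H => k _ /andP [a b]; by exists k.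
- move=> k i; move/allP: (H3 k (labsP k)) => /(_ i (ords5P i)) /eqP //.
- move=> k; case/hasP: (H4 k (labsP k)) => i _ H; by exists i.
Qed.

Lemma goodP_U : goodP DU.
Proof.
have eid : forall x, @sd_e DU x = x by [].
split => //.
- by move=> x y j nj; exists j => //; rewrite rl_uv eqxx.
- move=> k i; have -> : @sd_lab DU k = [:: labU k] by [].
  apply/idP/idP => [|H].
    rewrite inE => /eqP e; apply/hasP; exists k; first by apply: labsP.
    by rewrite !eid rl_uv negbK eqxx e eqxx.
  case/hasP: H => j _ /andP [].
  rewrite !eid rl_uv negbK => /eqP -> /eqP ->.
  by rewrite inE.
- move=> k; move/allP: privU => /(_ k (labsP k)) /hasP [i _ H]; by exists i.
Qed.

Section ShapeTheory.
Variable D : shd.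
Hypothesis gD : goodP D.
Local Notation K := (sd_K D).
Local Notation P := (sd_P D).
Local Notation e := (@sd_e D).
Local Notation lb := (@sd_lab D).

Definition phiD (E : shd) (a : {set sd_K E * sd_K E}) : {set 'I_5} :=
  \bigcup_(k in SS (sd_P E) a) s5 (@sd_lab E k).

Lemma phi_nat a : a \in ConC K -> @phiD DU (Cg (img e a)) = @phiD D a.
Proof.
move=> aC; rewrite /phiD /= (SS_nat (gp_N1 gD) aC).
apply/setP=> i; apply/bigcupP/bigcupP.
  case=> j /bigcupP [k kS]; rewrite inE => nj; rewrite in_s5 inE => /eqP ji.
  exists k => //; rewrite in_s5 (gp_c4 gD); apply/hasP; exists j; rewrite ?labsP //.
  by rewrite nj ji eqxx.
case=> k kS; rewrite in_s5 (gp_c4 gD) => /hasP [j _ /andP [nj /eqP ji]].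
exists j; first by apply/bigcupP; exists k; rewrite // inE.
by rewrite in_s5 inE ji.
Qed.

Lemma phi_Th S : @phiD D (@Th _ _ P S) = \bigcup_(k in S) s5 (lb k).
Proof. by rewrite /phiD SS_Th. Qed.

Lemma bigcup_inj (S1 S2 : {set lab P}) :
  \bigcup_(k in S1) s5 (lb k) = \bigcup_(k in S2) s5 (lb k) -> S1 = S2.
Proof.
move=> E; apply/setP=> k; have [i /andP [ik /allP ipriv]] := gp_priv gD k.
have H : forall S : {set lab P}, (i \in \bigcup_(k' in S) s5 (lb k')) = (k \in S).
  move=> S; apply/bigcupP/idP => [[k' k'S]|kS]; last by exists k; rewrite // in_s5.
  rewrite in_s5 => ik'; have := ipriv k' (labsP k'); case: eqP => [e _ | _ /=].
    by rewrite -e.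
  by rewrite ik'.
by rewrite -!H E.
Qed.

Lemma phi_inj : {in ConC K &, injective (@phiD D)}.
Proof.
move=> a b aC bC E; apply: (SS_inj aC bC); exact: bigcup_inj.
Qed.

Lemma phi_join a b : a \in ConC K -> b \in ConC K ->
  @phiD D (con_join a b) = @phiD D a :|: @phiD D b.
Proof. by move=> aC bC; rewrite /phiD SS_join // bigcup_setU. Qed.

Lemma phi_zero : @phiD D (con_zero K) = set0.
Proof. by rewrite /phiD SS_zero big_set0. Qed.

Lemma phi_surj (S : {set lab P}) : exists2 a, a \in ConC K & @phiD D a = \bigcup_(k in S) s5 (lb k).
Proof. by exists (@Th _ _ P S); rewrite ?Th_ConC ?phi_Th. Qed.

Definition rr (u : LU) : K := nth (sd_x0 D) (sd_U D) (find (fun x => e x == u) (sd_U D)).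

Lemma rr_e x : rr (e x) = x.
Proof.
rewrite /rr; apply: (gp_inj gD).
have hx : has (fun y => e y == e x) (sd_U D) by apply/hasP; exists x; rewrite ?sd_UP.
by have /eqP := nth_find (sd_x0 D) hx.
Qed.

Lemma e_rr u : (exists y, e y = u) -> e (rr u) = u.
Proof. by case=> y <-; rewrite rr_e. Qed.
End ShapeTheory.


Lemma sg_mem (lb : finType) (lf : lb -> seq nat) (G : {set {set 'I_5}}) :
  (forall k, s5 (lf k) \in G) -> forall S : {set lb}, \bigcup_(k in S) s5 (lf k) \in subsl_gen G.
Proof.
move=> HG S; apply/bigcapP => X /and3P [X0 /subsetP GX /forallP XU].
elim/big_rec: _ => [//|k A _ HA].
by move: (XU (s5 (lf k))) => /implyP /(_ (GX _ (HG k))) /forallP /(_ A) /implyP /(_ HA).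
Qed.

Lemma sg_surj (lb : finType) (lf : lb -> seq nat) (G : {set {set 'I_5}}) :
  (forall g, g \in G -> exists k, s5 (lf k) = g) ->
  forall s, s \in subsl_gen G -> exists S : {set lb}, \bigcup_(k in S) s5 (lf k) = s.
Proof.
move=> HG s sG.
pose X := [set \bigcup_(k in S) s5 (lf k) | S : {set lb}].
have : s \in X.
  apply: (subsetP (bigcap_inf _ _) s sG); apply/and3P; split.
  - by apply/imsetP; exists set0; rewrite ?big_set0.
  - apply/subsetP=> g /HG [k <-]; apply/imsetP; exists [set k] => //.
    by rewrite big_set1.
  - apply/forallP=> a; apply/implyP=> /imsetP [Sa _ ->].
    apply/forallP=> b; apply/implyP=> /imsetP [Sb _ ->].
    by apply/imsetP; exists (Sa :|: Sb); rewrite ?bigcup_setU.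
by case/imsetP=> S _ ->; exists S.
Qed.

Inductive sh := SB | SS0 | SS1 | SS2 | ST0 | ST1 | ST2 | SU.
Definition data (s : sh) : shd :=
  match s with SB => DB | SS0 => DS0 | SS1 => DS1 | SS2 => DS2 | ST0 => DT0 | ST1 => DT1
  | ST2 => DT2 | SU => DU end.
Definition Dv (s : sh) : {set {set 'I_5}} :=
  match s with SB => Two | SS0 => S0 | SS1 => S1 | SS2 => S2 | ST0 => T0 | ST1 => T1
  | ST2 => T2 | SU => U end.
Definition codeb (b0 b1 b2 : bool) : sh :=
  match b0, b1, b2 with
  | false, false, false => SB | true, false, false => SS0 | false, true, false => SS1
  | false, false, true => SS2 | false, true, true => ST0 | true, false, true => ST1
  | true, true, false => ST2 | true, true, true => SU end.
Definition code (I : {set 'I_3}) : sh := codeb (inord 0 \in I) (inord 1 \in I) (inord 2 \in I).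

Lemma Dc_code I : Dc I = Dv (code I).
Proof. by rewrite /Dc /code; case: (inord 0 \in I); case: (inord 1 \in I); case: (inord 2 \in I). Qed.

Lemma sub_codeb b0 b1 b2 c0 c1 c2 : (b0 ==> c0) -> (b1 ==> c1) -> (b2 ==> c2) ->
  subchk (data (codeb b0 b1 b2)) (data (codeb c0 c1 c2)).
Proof.
by case: b0; case: b1; case: b2; case: c0; case: c1; case: c2 => //= _ _ _; vm_compute.
Qed.

Lemma sub_code (I J : {set 'I_3}) : I \subset J -> subchk (data (code I)) (data (code J)).
Proof.
move/subsetP=> IJ; apply: sub_codeb; apply/implyP; apply: IJ.
Qed.

Lemma good_all s : goodP (data s).
Proof.
case: s; try exact: goodP_U; apply: good_goodP.
exact: goodB. exact: goodS0. exact: goodS1. exact: goodS2. exact: goodT0. exact: goodT1.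
exact: goodT2.
Qed.

Lemma s5all : s5 [:: 0; 1; 2; 3; 4] = setT.
Proof. by apply/setP => i; rewrite !inE; case: i => [[|[|[|[|[|m]]]]] H]. Qed.

Lemma labU_surj (i : 'I_5) : exists j, labU j = val i.
Proof.
have H : all (fun i : 'I_5 => has (fun j => labU j == val i) (labs PU)) ords5 by vm_compute.
by move/allP: H => /(_ i (ords5P i)) /hasP [j _ /eqP e]; exists j.
Qed.

Lemma Dv_mem s (S : {set lab (sd_P (data s))}) :
  \bigcup_(k in S) s5 (@sd_lab (data s) k) \in Dv s.
Proof.
case: s S => S /=.
- have [->|[k kS]] := set_0Vmem S; first by rewrite big_set0 !inE eqxx.
  have -> : \bigcup_(k in S) s5 (@sd_lab DB k) = setT.
    by apply/eqP; rewrite eqEsubset subsetT /= -s5all (bigcup_max k kS).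
  by rewrite !inE eqxx orbT.
- apply: sg_mem => -[[|[|m]] H] //=; by rewrite !inE eqxx ?orbT.
- apply: sg_mem => -[[|[|m]] H] //=; by rewrite !inE eqxx ?orbT.
- apply: sg_mem => -[[|[|m]] H] //=; by rewrite !inE eqxx ?orbT.
- by apply: sg_mem => -[[]|[[]|[[]|[]]]] /=; rewrite !inE eqxx ?orbT.
- by apply: sg_mem => -[[[|[|[|m]]] H]|[]] //=; rewrite !inE eqxx ?orbT.
- by apply: sg_mem => -[[]|[[]|[[]|[]]]] /=; rewrite !inE eqxx ?orbT.
- by rewrite /U inE.
Qed.

Lemma Dv_surj s x : x \in Dv s ->
  exists S : {set lab (sd_P (data s))}, \bigcup_(k in S) s5 (@sd_lab (data s) k) = x.
Proof.
case: s => /=.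
- rewrite !inE => /orP [] /eqP ->; first by exists set0; rewrite big_set0.
  exists setT; apply/eqP; rewrite eqEsubset subsetT /= -s5all.
  exact: (bigcup_max tt).
- apply: sg_surj => g; rewrite !inE => /orP [] /eqP ->.
  + by exists (@Ordinal 2 0 erefl).
  + by exists (@Ordinal 2 1 erefl).
- apply: sg_surj => g; rewrite !inE => /orP [] /eqP ->.
  + by exists (@Ordinal 2 1 erefl).
  + by exists (@Ordinal 2 0 erefl).
- apply: sg_surj => g; rewrite !inE => /orP [] /eqP ->.
  + by exists (@Ordinal 2 0 erefl).
  + by exists (@Ordinal 2 1 erefl).
- apply: sg_surj => g; rewrite !inE => /orP [/orP [/orP [|]|]|] /eqP ->.
  + by exists (inl tt).
  + by exists (inr (inl tt)).
  + by exists (inr (inr (inl tt))).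
  + by exists (inr (inr (inr tt))).
- apply: sg_surj => g; rewrite !inE => /orP [/orP [/orP [|]|]|] /eqP ->.
  + by exists (inl (@Ordinal 3 0 erefl)).
  + by exists (inl (@Ordinal 3 1 erefl)).
  + by exists (inr tt).
  + by exists (inl (@Ordinal 3 2 erefl)).
- apply: sg_surj => g; rewrite !inE => /orP [/orP [/orP [|]|]|] /eqP ->.
  + by exists (inl tt).
  + by exists (inr (inl tt)).
  + by exists (inr (inr (inl tt))).
  + by exists (inr (inr (inr tt))).
- move=> _; exists [set j : lab PU | [exists i in x, val i == labU j]].
  apply/setP=> i; apply/bigcupP/idP.
    case=> j; rewrite inE => /existsP [i' /andP [i'x /eqP e]]; rewrite in_s5 inE => /eqP e'.
    by have -> : i = i' by apply: val_inj; rewrite e e'.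
  move=> ix; have [j ej] := labU_surj i; exists j.
    by rewrite inE; apply/existsP; exists i; rewrite ix ej eqxx.
  by rewrite in_s5 inE ej.
Qed.

Lemma sub_ex (D1 D2 : shd) : subchk D1 D2 -> forall x, exists y, @sd_e D2 y = @sd_e D1 x.
Proof.
move/allP=> H x; have /hasP [y _ /eqP e] := H x (sd_UP x); by exists y.
Qed.

Theorem theorem6p1 :
  exists (d : {set 'I_3} -> Order.disp_t)
         (L : forall I : {set 'I_3}, finLatticeType (d I))
         (f : forall I J : {set 'I_3}, L I -> L J)
         (phi : forall I : {set 'I_3}, {set (L I * L I)} -> {set 'I_5}),
    (forall I J : {set 'I_3}, I \subset J -> lattice_embedding (f I J)) /\
    (forall (I : {set 'I_3}) (x : L I), f I I x = x) /\
    (forall I J K : {set 'I_3}, I \subset J -> J \subset K ->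
       forall x : L I, f J K (f I J x) = f I K x) /\
    (forall I : {set 'I_3},
       (forall a : {set (L I * L I)}, a \in ConC (L I) -> phi I a \in Dc I) /\
       {in ConC (L I) &, injective (phi I)} /\
       (forall s : {set 'I_5}, s \in Dc I -> exists2 a, a \in ConC (L I) & phi I a = s) /\
       (forall a b : {set (L I * L I)}, a \in ConC (L I) -> b \in ConC (L I) ->
          phi I (con_join a b) = phi I a :|: phi I b) /\
       phi I (con_zero (L I)) = set0) /\
    (forall I J : {set 'I_3}, I \subset J -> forall a : {set (L I * L I)}, a \in ConC (L I) ->
       phi J (conc_map (f I J) a) = phi I a).
Proof.
exists (fun I => sd_d (data (code I))), (fun I => sd_K (data (code I))).
exists (fun I J x => rr (data (code J)) (@sd_e (data (code I)) x)).
exists (fun I a => @phiD (data (code I)) a).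
split; [|split; [|split; [|split]]].
- move=> I J /sub_code; move: (code I) (code J) => s t st /=.
  have gs := good_all s; have gt := good_all t; have ex := sub_ex st.
  have ee : forall x, @sd_e (data t) (rr (data t) (@sd_e (data s) x)) = @sd_e (data s) x.
    by move=> x; apply: (e_rr gt); apply: ex.
  split; [|split].
  + move=> x y /(congr1 (@sd_e (data t))); rewrite !ee; exact: gp_inj.
  + by move=> x y; apply: (gp_inj gt); rewrite (gp_meet gt) !ee (gp_meet gs).
  + by move=> x y; apply: (gp_inj gt); rewrite (gp_join gt) !ee (gp_join gs).
- by move=> I x /=; rewrite (rr_e (good_all _)).
- move=> I J K IJ JK x /=; have := sub_ex (sub_code IJ) x; case=> y ey.
  by rewrite -ey (rr_e (good_all _)) ey.
- move=> I; rewrite Dc_code; move: (code I) => s /=; have gs := good_all s.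
  split; [|split; [|split; [|split]]].
  + by move=> a _; apply: Dv_mem.
  + exact: phi_inj.
  + move=> x /Dv_surj [S <-]; exact: phi_surj.
  + exact: phi_join.
  + exact: phi_zero.
- move=> I J /sub_code; move: (code I) (code J) => s t st a aC /=.
  have gs := good_all s; have gt := good_all t; have ex := sub_ex st.
  have ee : forall x, @sd_e (data t) (rr (data t) (@sd_e (data s) x)) = @sd_e (data s) x.
    by move=> x; apply: (e_rr gt); apply: ex.
  rewrite /conc_map -(phi_nat gt (con_ConC (Cg_con _))).
  rewrite -/(img _ _) (Cg_img (gp_meet gt) (gp_join gt)) -(phi_nat gs aC).
  congr (@phiD DU (Cg _)); rewrite /img -imset_comp; apply: eq_imset => p /=.
  by rewrite !ee.
Qed.
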